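(* Let $q_1,t_1,q_2,t_2,v$ be indeterminates (or complex numbers in the region of convergence of all series below). Define $$T_1:=\frac{(v)_\infty}{(vq_1q_2)_\infty}\sum_{i=0}^\infty t_1^i\frac{(vq_1)_i}{(v)_i}\sum_{j=i+1}^\infty t_2^j\frac{(vq_1q_2)_j}{(vq_1)_j},$$ $$T_2:=\frac{(v)_\infty}{(vq_1q_2)_\infty}\sum_{i=0}^\infty t_2^i\frac{(vq_2)_i}{(v)_i}\sum_{j=i+1}^\infty t_1^j\frac{(vq_1q_2)_j}{(vq_2)_j},$$ $$T_3:=\frac{(v)_\infty}{(vq_1q_2)_\infty}\sum_{i=0}^\infty (t_1t_2)^i\frac{(vq_1q_2)_i}{(v)_i}.$$ Then $$\big\langle \widehat B_\lambda(q_1,t_1)\,\widehat B_\lambda(q_2,t_2)\big\rangle_v=(1-q_1)^{-1}(1-q_2)^{-1}(T_1+T_2+T_3).$$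
   Context: Notation: $(a)_0=1$, $(a)_r=\prod_{k=0}^{r-1}(1-av^k)$, $(a)_\infty=\prod_{k\ge0}(1-av^k)$. For a partition $\lambda=(\lambda_1,\lambda_2,\ldots)$ (with $\lambda_i=0$ beyond its length), $\widehat B_\lambda(q,t)=\frac1{1-q}\sum_{i\ge1}t^{i-1}q^{\lambda_i}$. For a function $f$ on the set $\mathcal P$ of partitions, $\langle f\rangle_v:=(v)_\infty\sum_{\lambda\in\mathcal P}f(\lambda)v^{|\lambda|}$. *)

(* Defs.v *)
From Stdlib Require Import Reals List Arith Bool ClassicalEpsilon.
From Coquelicot Require Import Coquelicot.
Open Scope C_scope.

Definition csum (a : nat -> C) : C :=
  epsilon (inhabits (RtoC 0)) (fun l => @is_series C_AbsRing C_NormedModule a l).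

Definition clim (u : nat -> C) : C :=
  epsilon (inhabits (RtoC 0)) (fun l => filterlim u eventually (locally l)).

Fixpoint qpoch (a v : C) (r : nat) : C :=
  match r with
  | O => RtoC 1
  | S r' => qpoch a v r' * (RtoC 1 - a * Cpow v r')
  end.

Definition qpoch_inf (a v : C) : C := clim (fun r => qpoch a v r).

(* A partition lambda is represented by the list (lambda_1, lambda_2, ...)
   possibly padded with zeros; lambda_i = nth (i-1) lambda 0. *)

(* B^_lambda(q,t) = 1/(1-q) * sum_{i>=1} t^(i-1) q^(lambda_i) *)
Definition Bhat (lam : list nat) (q t : C) : C :=
  / (RtoC 1 - q) * csum (fun i => Cpow t i * Cpow q (nth i lam 0%nat)).

Fixpoint bounded_lists (n m : nat) : list (list nat) :=
  match n with
  | O => nil :: nil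
  | S n' => flat_map (fun l => map (fun x => x :: l) (seq 0 (S m))) (bounded_lists n' m)
  end.

Fixpoint nonincreasing (l : list nat) : bool :=
  match l with
  | x :: ((y :: _) as l') => Nat.leb y x && nonincreasing l'
  | _ => true
  end.

Definition list_sum (l : list nat) : nat := fold_right Nat.add 0%nat l.

(* The partitions of n, each listed exactly once as a nonincreasing list of
   length n (padded by zeros) with sum n. *)
Definition partitions (n : nat) : list (list nat) :=
  filter (fun l => nonincreasing l && Nat.eqb (list_sum l) n) (bounded_lists n n).

Definition csum_list (l : list C) : C := fold_right Cplus (RtoC 0) l.

(* <f>_v = (v)_oo * sum_{lambda} f(lambda) v^{|lambda|}, the sum over all
   partitions grouped by size |lambda| = n. *)
Definition qavg (f : list nat -> C) (v : C) : C :=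
  qpoch_inf v v * csum (fun n => csum_list (map f (partitions n)) * Cpow v n).

Definition T1 (q1 t1 q2 t2 v : C) : C :=
  qpoch_inf v v / qpoch_inf (v * q1 * q2) v *
  csum (fun i => Cpow t1 i * qpoch (v * q1) v i / qpoch v v i *
    csum (fun k => let j := (k + i + 1)%nat in
            Cpow t2 j * qpoch (v * q1 * q2) v j / qpoch (v * q1) v j)).

Definition T2 (q1 t1 q2 t2 v : C) : C :=
  qpoch_inf v v / qpoch_inf (v * q1 * q2) v *
  csum (fun i => Cpow t2 i * qpoch (v * q2) v i / qpoch v v i *
    csum (fun k => let j := (k + i + 1)%nat in
            Cpow t1 j * qpoch (v * q1 * q2) v j / qpoch (v * q2) v j)).

Definition T3 (q1 t1 q2 t2 v : C) : C :=
  qpoch_inf v v / qpoch_inf (v * q1 * q2) v *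
  csum (fun i => Cpow (t1 * t2) i * qpoch (v * q1 * q2) v i / qpoch v v i).

(* Main.v *)
Require Import Defs.
From Stdlib Require Import Reals List Lra Lia Bool Arith ClassicalEpsilon FunctionalExtensionality.
From Coquelicot Require Import Coquelicot.
Open Scope C_scope.

Ltac cring := match goal with |- ?a = ?b => change (@eq C a b) end; ring.

Ltac rring := match goal with |- ?a = ?b => change (@eq R a b) end; ring.

Ltac cfield := match goal with |- ?a = ?b => change (@eq C a b) end; field.

Notation iss := (@is_series C_AbsRing C_NormedModule).

Definition cvC (u : nat -> C) (l : C) : Prop :=
  is_lim_seq (fun n => Cmod (u n - l)) 0%R.

Lemma cvC_filterlim u l : cvC u l <-> filterlim u eventually (locally l).
Proof.
  unfold cvC. rewrite <- is_lim_seq_spec. rewrite filterlim_locally_ball_norm.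
  split; intros H eps; specialize (H eps); revert H; apply filter_imp; intros n H.
  - unfold ball_norm. change (Cmod (u n - l) < eps)%R.
    rewrite Rminus_0_r, Rabs_pos_eq in H by apply Cmod_ge_0. exact H.
  - unfold ball_norm in H. change (Cmod (u n - l) < eps)%R in H.
    rewrite Rminus_0_r, Rabs_pos_eq by apply Cmod_ge_0. exact H.
Qed.

Lemma iss_cvC a l : iss a l <-> cvC (sum_n a) l.
Proof. unfold is_series. rewrite cvC_filterlim. tauto. Qed.

Lemma cvC_unique u l1 l2 : cvC u l1 -> cvC u l2 -> l1 = l2.
Proof.
  rewrite !cvC_filterlim. intros H1 H2.
  exact (filterlim_locally_unique (F := eventually) u l1 l2 H1 H2).
Qed.

Lemma csum_spec a l : iss a l -> csum a = l.
Proof.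
  intros H. unfold csum.
  assert (E : exists l0, iss a l0) by (exists l; exact H).
  pose proof (epsilon_spec (inhabits (RtoC 0)) _ E) as H'.
  exact (filterlim_locally_unique (F := eventually) _ _ _ H' H).
Qed.

Lemma clim_spec u l : cvC u l -> clim u = l.
Proof.
  rewrite cvC_filterlim. intros H. unfold clim.
  assert (E : exists l0, filterlim u eventually (locally l0)) by (exists l; exact H).
  pose proof (epsilon_spec (inhabits (RtoC 0)) _ E) as H'.
  exact (filterlim_locally_unique (F := eventually) _ _ _ H' H).
Qed.

Lemma iss_unique a l1 l2 : iss a l1 -> iss a l2 -> l1 = l2.
Proof. intros H1 H2. rewrite <- (csum_spec _ _ H1). apply csum_spec, H2. Qed.

Lemma cvC_ext_ev u v l N : (forall n, (N <= n)%nat -> u n = v n) -> cvC u l -> cvC v l.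
Proof.
  unfold cvC. intros E H. rewrite <- is_lim_seq_spec in *. intros eps.
  destruct (H eps) as [M HM]. exists (max N M). intros n Hn.
  rewrite <- E by lia. apply HM. lia.
Qed.

Lemma cvC_ext u v l : (forall n, u n = v n) -> cvC u l -> cvC v l.
Proof. intros E. apply (cvC_ext_ev u v l 0). intros; auto. Qed.

Lemma cvC_const c : cvC (fun _ => c) c.
Proof.
  unfold cvC. eapply is_lim_seq_ext; [|apply is_lim_seq_const].
  intros n. simpl. replace (c - c) with (RtoC 0) by ring. rewrite Cmod_0. reflexivity.
Qed.

Lemma cvC_le u l (b : nat -> R) : (forall n, Cmod (u n - l) <= b n)%R -> is_lim_seq b 0%R -> cvC u l.
Proof.
  intros H Hb. unfold cvC. apply is_lim_seq_le_le with (u := fun _ => 0%R) (w := b).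
  - intros n. split; [apply Cmod_ge_0|apply H].
  - apply is_lim_seq_const.
  - exact Hb.
Qed.

Lemma cvC_plus u v lu lv : cvC u lu -> cvC v lv -> cvC (fun n => u n + v n) (lu + lv).
Proof.
  intros Hu Hv. apply cvC_le with (b := fun n => (Cmod (u n - lu) + Cmod (v n - lv))%R).
  - intros n. replace (u n + v n - (lu + lv)) with ((u n - lu) + (v n - lv)) by ring.
    apply Cmod_triangle.
  - replace 0%R with (0 + 0)%R by ring. apply (is_lim_seq_plus' _ _ 0%R 0%R); assumption.
Qed.

Lemma cvC_mult u v lu lv : cvC u lu -> cvC v lv -> cvC (fun n => u n * v n) (lu * lv).
Proof.
  intros Hu Hv.
  apply cvC_le with (b := fun n => (Cmod (u n - lu) * (Cmod (v n - lv) + Cmod lv) + Cmod lu * Cmod (v n - lv))%R).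
  - intros n. replace (u n * v n - lu * lv) with ((u n - lu) * ((v n - lv) + lv) + lu * (v n - lv)) by ring.
    eapply Rle_trans; [apply Cmod_triangle|]. rewrite !Cmod_mult.
    apply Rplus_le_compat_r. apply Rmult_le_compat_l; [apply Cmod_ge_0|apply Cmod_triangle].
  - replace 0%R with (0 * (0 + Cmod lv) + Cmod lu * 0)%R by ring.
    apply is_lim_seq_plus'; [apply is_lim_seq_mult'|apply is_lim_seq_mult'];
      try assumption; try apply is_lim_seq_const.
    apply is_lim_seq_plus'; [assumption|apply is_lim_seq_const].
Qed.

Lemma cvC_scal c u l : cvC u l -> cvC (fun n => c * u n) (c * l).
Proof. intros H. apply cvC_mult; [apply cvC_const|exact H]. Qed.

Lemma cvC_S u l : cvC (fun n => u (S n)) l -> cvC u l.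
Proof.
  unfold cvC. intros H. rewrite <- is_lim_seq_spec in *. intros eps.
  destruct (H eps) as [M HM]. exists (S M). intros n Hn.
  destruct n as [|n]; [lia|]. apply HM. lia.
Qed.

Lemma iss_ext a b l : (forall n, a n = b n) -> iss a l -> iss b l.
Proof. apply is_series_ext. Qed.

Lemma iss_plus a b la lb : iss a la -> iss b lb -> iss (fun n => a n + b n) (la + lb).
Proof. intros. apply (is_series_plus a b la lb); assumption. Qed.

Lemma iss_scal c a l : iss a l -> iss (fun n => c * a n) (c * l).
Proof. intros. apply (is_series_scal c a l); assumption. Qed.

Lemma iss_scal_r c a l : iss a l -> iss (fun n => a n * c) (l * c).
Proof. intros H. rewrite Cmult_comm. eapply iss_ext; [|apply (iss_scal c _ _ H)]. intros; simpl; ring. Qed.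

Lemma iss_opp a l : iss a l -> iss (fun n => - a n) (- l).
Proof. intros. apply (is_series_opp a l); assumption. Qed.

Lemma iss_minus a b la lb : iss a la -> iss b lb -> iss (fun n => a n - b n) (la - lb).
Proof. intros Ha Hb. apply iss_plus; [exact Ha| apply iss_opp, Hb]. Qed.

Lemma iss_zero : iss (fun _ => RtoC 0) (RtoC 0).
Proof.
  apply iss_cvC. eapply cvC_ext; [|apply cvC_const]. intros n; simpl.
  induction n. rewrite sum_O. reflexivity. rewrite sum_Sn, <- IHn. change (RtoC 0 = RtoC 0 + RtoC 0). ring.
Qed.

Lemma iss_shift (a : nat -> C) (l : C) : iss (fun k => a (S k)) l -> iss a (a 0%nat + l).
Proof.
  intros H. apply is_series_decr_1.
  match goal with |- is_series _ ?x => replace x with l end. exact H.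
  change (@eq C l (a 0%nat + l + - a 0%nat)). ring.
Qed.

Lemma iss_shift_inv (a : nat -> C) (l : C) : iss a l -> iss (fun k => a (S k)) (l - a 0%nat).
Proof.
  intros H. apply is_series_incr_1.
  match goal with |- is_series _ ?x => replace x with l end. exact H.
  change (@eq C l (l - a 0%nat + a 0%nat)). ring.
Qed.

Fixpoint fsum (g : nat -> C) (n : nat) : C :=
  match n with O => RtoC 0 | S n => fsum g n + g n end.
Fixpoint fsumR (g : nat -> R) (n : nat) : R :=
  match n with O => 0%R | S n => (fsumR g n + g n)%R end.

Lemma sum_n_fsum (g : nat -> C) n : sum_n g n = fsum g (S n).
Proof.
  induction n. rewrite sum_O. simpl. change (g 0%nat = 0 + g 0%nat). ring.
  rewrite sum_Sn, IHn. reflexivity.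
Qed.

Lemma sum_n_fsumR (g : nat -> R) n : sum_n g n = fsumR g (S n).
Proof.
  induction n. rewrite sum_O. simpl. ring.
  rewrite sum_Sn, IHn. reflexivity.
Qed.

Lemma fsum_ext (g h : nat -> C) n : (forall k, (k < n)%nat -> g k = h k) -> fsum g n = fsum h n.
Proof. induction n; simpl; intros E; auto. rewrite IHn, E; auto. Qed.

Lemma fsumR_ext g h n : (forall k, (k < n)%nat -> g k = h k) -> fsumR g n = fsumR h n.
Proof. induction n; simpl; intros E; auto. rewrite IHn, E; auto. Qed.

Lemma fsum_plus (g h : nat -> C) n : fsum (fun k => g k + h k) n = fsum g n + fsum h n.
Proof. induction n; simpl. ring. rewrite IHn. ring. Qed.

Lemma fsum_scal (c : C) (g : nat -> C) n : fsum (fun k => c * g k) n = c * fsum g n.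
Proof. induction n; simpl. ring. rewrite IHn. ring. Qed.

Lemma fsum_zero n : fsum (fun _ => RtoC 0) n = 0.
Proof. induction n; simpl. reflexivity. rewrite IHn. ring. Qed.

Lemma fsum_Cmod (g : nat -> C) n : (Cmod (fsum g n) <= fsumR (fun k => Cmod (g k)) n)%R.
Proof.
  induction n; simpl. rewrite Cmod_0. lra.
  eapply Rle_trans; [apply Cmod_triangle|]. lra.
Qed.

Lemma fsumR_le g h n : (forall k, g k <= h k)%R -> (fsumR g n <= fsumR h n)%R.
Proof. intros H; induction n; simpl. lra. specialize (H n). lra. Qed.

Lemma fsumR_nonneg g n : (forall k, 0 <= g k)%R -> (0 <= fsumR g n)%R.
Proof. intros H; induction n; simpl. lra. specialize (H n). lra. Qed.

Lemma fsumR_mono g n m : (forall k, 0 <= g k)%R -> (n <= m)%nat -> (fsumR g n <= fsumR g m)%R.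
Proof.
  intros H Hnm. induction Hnm. lra. simpl. specialize (H m). lra.
Qed.

Lemma fsum_RtoC g n : fsum (fun k => RtoC (g k)) n = RtoC (fsumR g n).
Proof. induction n; simpl. reflexivity. rewrite IHn. rewrite RtoC_plus. reflexivity. Qed.

Lemma Cmod_rev x l : (Rabs (Cmod x - Cmod l) <= Cmod (x - l))%R.
Proof.
  apply Rabs_le. split.
  - pose proof (Cmod_triangle (l - x) x) as H. replace (l - x + x) with l in H by ring.
    replace (l - x) with (- (x - l)) in H by ring. rewrite Cmod_opp in H. lra.
  - pose proof (Cmod_triangle (x - l) l) as H. replace (x - l + l) with x in H by ring. lra.
Qed.

Lemma cvC_Cmod u l : cvC u l -> is_lim_seq (fun n => Cmod (u n)) (Cmod l).
Proof.
  intros H. unfold cvC in H.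
  apply is_lim_seq_le_le with (u := fun n => (Cmod l - Cmod (u n - l))%R)
                              (w := fun n => (Cmod l + Cmod (u n - l))%R).
  - intros n. pose proof (Cmod_rev (u n) l) as R. apply Rabs_le_between' in R. lra.
  - replace (Finite (Cmod l)) with (Rbar_minus (Cmod l) 0%R).
    apply is_lim_seq_minus'; [apply is_lim_seq_const|exact H].
    simpl. f_equal. ring.
  - replace (Finite (Cmod l)) with (Rbar_plus (Cmod l) 0%R).
    apply is_lim_seq_plus'; [apply is_lim_seq_const|exact H].
    simpl. f_equal. ring.
Qed.

Definition issR := (@is_series R_AbsRing R_NormedModule).

Lemma issR_lim (b : nat -> R) B : is_series b B -> is_lim_seq (fun n => fsumR b n) B.
Proof.
  intros H. apply is_lim_seq_incr_1. eapply is_lim_seq_ext; [|exact H].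
  intros n. simpl. rewrite sum_n_fsumR. reflexivity.
Qed.

Lemma iss_bound (a : nat -> C) (l : C) (b : nat -> R) B :
  iss a l -> is_series b B -> (forall n, Cmod (a n) <= b n)%R -> (Cmod l <= B)%R.
Proof.
  intros Ha Hb Hab.
  apply iss_cvC in Ha. apply cvC_Cmod in Ha.
  assert (Hb' := Hb). apply issR_lim in Hb'. apply is_lim_seq_incr_1 in Hb'.
  assert (Rbar_le (Cmod l) B).
  { eapply is_lim_seq_le; [|exact Ha|exact Hb'].
    intros n. cbv beta. rewrite sum_n_fsum. eapply Rle_trans; [apply fsum_Cmod|].
    apply fsumR_le. exact Hab. }
  exact H.
Qed.

Lemma iss_abs (a : nat -> C) (b : nat -> R) :
  (forall n, Cmod (a n) <= b n)%R -> ex_series b -> exists l, iss a l.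
Proof.
  intros H Hb.
  assert (Hex : @ex_series C_AbsRing C_CompleteNormedModule a).
  { apply (ex_series_le a b); [|exact Hb]. intros n. change (Cmod (a n) <= b n)%R. apply H. }
  destruct Hex as [l Hl]. exists l. exact Hl.
Qed.

Lemma iss_csum (a : nat -> C) : (exists l, iss a l) -> iss a (csum a).
Proof. intros [l H]. rewrite (csum_spec _ _ H). exact H. Qed.

Lemma iss_shiftn (a : nat -> C) (l : C) n : iss (fun k => a (n + k)%nat) l -> iss a (fsum a n + l).
Proof.
  revert a l. induction n; intros a l H.
  - simpl. replace (RtoC 0 + l) with l by ring. eapply iss_ext; [|exact H]. intros; reflexivity.
  - simpl. replace (fsum a n + a n + l) with (fsum a n + (a n + l)) by ring.
    apply IHn. pose proof (iss_shift (fun k => a (n + k)%nat) l) as E.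
    cbv beta in E. rewrite Nat.add_0_r in E. apply E.
    eapply iss_ext; [|exact H]. intros k. cbv beta. f_equal. lia.
Qed.

Lemma csum_list_app l1 l2 : csum_list (l1 ++ l2) = csum_list l1 + csum_list l2.
Proof. induction l1; simpl. ring. rewrite IHl1. ring. Qed.

Lemma csum_list_seq (h : nat -> C) n : csum_list (map h (seq 0 n)) = fsum h n.
Proof.
  induction n. reflexivity. rewrite seq_S, map_app, csum_list_app, IHn. simpl. ring.
Qed.

Lemma csum_list_flat_map {A B} (f : B -> C) (g : A -> list B) L :
  csum_list (map f (flat_map g L)) = csum_list (map (fun a => csum_list (map f (g a))) L).
Proof. induction L; simpl. reflexivity. rewrite map_app, csum_list_app, IHL. reflexivity. Qed.

Fixpoint sumBL (k m : nat) (f : list nat -> C) : C :=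
  match k with
  | O => f nil
  | S k' => sumBL k' m (fun l => fsum (fun x => f (x :: l)) (S m))
  end.

Fixpoint sumBLR (k m : nat) (f : list nat -> R) : R :=
  match k with
  | O => f nil
  | S k' => sumBLR k' m (fun l => fsumR (fun x => f (x :: l)) (S m))
  end.

Lemma sumBL_spec k m f : csum_list (map f (bounded_lists k m)) = sumBL k m f.
Proof.
  revert f. induction k; intros f. simpl. ring.
  cbn [bounded_lists sumBL]. rewrite csum_list_flat_map. rewrite <- IHk. f_equal. apply map_ext.
  intros l. rewrite map_map. apply (csum_list_seq (fun x => f (x :: l))).
Qed.

Definition good (k m : nat) (l : list nat) := length l = k /\ (forall x, In x l -> (x <= m)%nat).

Lemma sumBL_ext k m f g : (forall l, good k m l -> f l = g l) -> sumBL k m f = sumBL k m g.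
Proof.
  revert f g. induction k; intros f g H; cbn [sumBL sumBLR].
  - apply H. split; simpl; auto. intros x [].
  - apply IHk. intros l [Hl Hb]. apply fsum_ext. intros x Hx. apply H. split.
    simpl; lia. intros y [<-|Hy]; [lia|auto].
Qed.

Lemma sumBLR_ext k m f g : (forall l, good k m l -> f l = g l) -> sumBLR k m f = sumBLR k m g.
Proof.
  revert f g. induction k; intros f g H; cbn [sumBL sumBLR].
  - apply H. split; simpl; auto. intros x [].
  - apply IHk. intros l [Hl Hb]. apply fsumR_ext. intros x Hx. apply H. split.
    simpl; lia. intros y [<-|Hy]; [lia|auto].
Qed.

Lemma sumBL_plus k m f g : sumBL k m (fun l => f l + g l) = sumBL k m f + sumBL k m g.
Proof.
  revert f g. induction k; intros f g; cbn [sumBL sumBLR]. reflexivity.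
  rewrite <- IHk. apply sumBL_ext. intros l _. apply fsum_plus.
Qed.

Lemma sumBL_scal k m c f : sumBL k m (fun l => c * f l) = c * sumBL k m f.
Proof.
  revert f. induction k; intros f; cbn [sumBL sumBLR]. reflexivity.
  rewrite <- IHk. apply sumBL_ext. intros l _. apply fsum_scal.
Qed.

Lemma sumBL_zero k m : sumBL k m (fun _ => RtoC 0) = 0.
Proof.
  induction k; cbn [sumBL]. reflexivity.
  transitivity (sumBL k m (fun _ => RtoC 0)); [apply sumBL_ext; intros; apply fsum_zero|exact IHk].
Qed.

Lemma sumBLR_le k m f g : (forall l, f l <= g l)%R -> (sumBLR k m f <= sumBLR k m g)%R.
Proof.
  revert f g. induction k; intros f g H; cbn [sumBL sumBLR]. apply H.
  apply IHk. intros l. apply fsumR_le. intros; apply H.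
Qed.

Lemma sumBLR_nonneg k m f : (forall l, 0 <= f l)%R -> (0 <= sumBLR k m f)%R.
Proof.
  revert f. induction k; intros f H; cbn [sumBLR]. apply H.
  apply IHk. intros l. apply fsumR_nonneg. intros; apply H.
Qed.

Lemma sumBL_Cmod k m f : (Cmod (sumBL k m f) <= sumBLR k m (fun l => Cmod (f l)))%R.
Proof.
  revert f. induction k; intros f; cbn [sumBL sumBLR]. lra.
  eapply Rle_trans; [apply IHk|]. apply sumBLR_le. intros l. apply fsum_Cmod.
Qed.

Lemma sumBL_RtoC k m g : sumBL k m (fun l => RtoC (g l)) = RtoC (sumBLR k m g).
Proof.
  revert g. induction k; intros g; cbn [sumBL sumBLR]. reflexivity.
  rewrite <- IHk. apply sumBL_ext. intros l _. apply fsum_RtoC.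
Qed.

Lemma fsum_swap (F : nat -> nat -> C) n m :
  fsum (fun x => fsum (fun y => F x y) n) m = fsum (fun y => fsum (fun x => F x y) m) n.
Proof.
  revert n. induction m; intros n; simpl.
  - symmetry. induction n; simpl. reflexivity. rewrite IHn. ring.
  - rewrite IHm. rewrite <- fsum_plus. reflexivity.
Qed.

Lemma sumBL_last k m f :
  sumBL (S k) m f = sumBL k m (fun l => fsum (fun x => f (l ++ x :: nil)) (S m)).
Proof.
  revert f. induction k; intros f.
  - reflexivity.
  - change (sumBL (S (S k)) m f) with
      (sumBL (S k) m (fun l => fsum (fun y => f (y :: l)) (S m))).
    rewrite IHk. cbn [sumBL]. apply sumBL_ext. intros l _.
    exact (fsum_swap (fun x y => f (y :: l ++ x :: nil)) (S m) (S m)).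
Qed.

Lemma fsum_trunc (h : nat -> C) n n' : (n' <= n)%nat -> (forall x, (n' <= x < n)%nat -> h x = 0) -> fsum h n = fsum h n'.
Proof.
  intros Hn H. induction Hn. reflexivity. simpl. rewrite H by lia. rewrite IHHn. ring.
  intros x Hx; apply H; lia.
Qed.

Lemma sumBL_bound k m m' (f : list nat -> C) : (m' <= m)%nat ->
  (forall l, (exists x, In x l /\ (m' < x)%nat) -> f l = 0) -> sumBL k m f = sumBL k m' f.
Proof.
  revert f. induction k; intros f Hm H; cbn [sumBL]. reflexivity.
  rewrite (IHk (fun l => fsum (fun x => f (x :: l)) (S m))); auto.
  - apply sumBL_ext. intros l _. apply (fsum_trunc (fun x => f (x :: l))). lia. intros x Hx. apply H.
    exists x. split; [left; auto|lia].
  - intros l [x [Hx Hx']]. rewrite <- (fsum_zero (S m)). apply fsum_ext. intros y _.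
    apply H. exists x. split; [right; auto|auto].
Qed.

Lemma fsum_S (h : nat -> C) n : fsum h (S n) = h 0%nat + fsum (fun y => h (S y)) n.
Proof. induction n; simpl. simpl. ring. simpl in IHn. rewrite IHn. ring. Qed.

Definition allpos (l : list nat) := forallb (fun x => Nat.ltb 0 x) l.

Lemma sumBL_shift k m (f : list nat -> C) :
  sumBL k (S m) (fun L => if allpos L then f L else 0) = sumBL k m (fun L => f (map S L)).
Proof.
  revert f. induction k; intros f. reflexivity.
  cbn [sumBL].
  transitivity (sumBL k (S m) (fun l => if allpos l then fsum (fun y => f (S y :: l)) (S m) else 0)).
  2:{ rewrite (IHk (fun l => fsum (fun y => f (S y :: l)) (S m))). apply sumBL_ext. intros; reflexivity. }
  apply sumBL_ext. intros l _. rewrite fsum_S.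
  assert (A0 : allpos (0%nat :: l) = false) by reflexivity. rewrite A0. rewrite Cplus_0_l.
  assert (AS : forall y, allpos (S y :: l) = allpos l) by reflexivity.
  destruct (allpos l) eqn:E.
  - apply fsum_ext. intros y _. rewrite AS. reflexivity.
  - transitivity (fsum (fun _ => RtoC 0) (S m)); [|apply fsum_zero].
    apply fsum_ext. intros y _. rewrite AS. reflexivity.
Qed.

Fixpoint W (z : nat -> C) (l : list nat) : C :=
  match l with nil => RtoC 1 | x :: l' => Cpow (z 0%nat) x * W (fun r => z (S r)) l' end.

Fixpoint Zc (z : nat -> C) (n : nat) : C :=
  match n with O => RtoC 1 | S n => Zc z n * z n end.

Lemma Zc_shift z n : Zc z (S n) = z 0%nat * Zc (fun r => z (S r)) n.
Proof. induction n. simpl. ring. simpl in *. rewrite IHn. ring. Qed.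

Lemma Cpow_add (c : C) a b : Cpow c (a + b) = Cpow c a * Cpow c b.
Proof. induction a; simpl. ring. rewrite IHa. ring. Qed.

Lemma Cpow_mul_l (a b : C) n : Cpow (a * b) n = Cpow a n * Cpow b n.
Proof. induction n; simpl. ring. rewrite IHn. ring. Qed.

Lemma Cpow_1 n : Cpow (RtoC 1) n = 1.
Proof. induction n; simpl. reflexivity. rewrite IHn. ring. Qed.

Lemma Cmod_Cpow_le (c : C) n : (Cmod c <= 1)%R -> (Cmod (Cpow c n) <= 1)%R.
Proof.
  intros H. induction n; simpl. rewrite Cmod_1. lra.
  rewrite Cmod_mult. replace 1%R with (1 * 1)%R by ring.
  apply Rmult_le_compat; auto; apply Cmod_ge_0.
Qed.

Lemma W_app1 z l x : W z (l ++ x :: nil) = W z l * Cpow (z (length l)) x.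
Proof.
  revert z. induction l; intros z; simpl. ring. rewrite IHl. ring.
Qed.

Lemma W_mapS z l : W z (map S l) = W z l * Zc z (length l).
Proof.
  revert z. induction l; intros z. simpl. ring.
  cbn [map W length]. rewrite IHl. rewrite Zc_shift. simpl Cpow. ring.
Qed.

Lemma W_mult f g l : W (fun r => f r * g r) l = W f l * W g l.
Proof.
  revert f g. induction l; intros f g; simpl. ring.
  rewrite (IHl (fun r => f (S r)) (fun r => g (S r))). rewrite Cpow_mul_l. ring.
Qed.

Lemma W_one l : W (fun _ => RtoC 1) l = 1.
Proof. induction l; simpl. reflexivity. rewrite IHl, Cpow_1. ring. Qed.

Lemma W_ext z z' l : (forall r, z r = z' r) -> W z l = W z' l.
Proof.
  revert z z'. induction l; intros z z' H; simpl. reflexivity.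
  rewrite H. f_equal. apply IHl. intros; apply H.
Qed.

Definition indz (i : nat) (a : C) : nat -> C := fun r => if Nat.eqb r i then a else RtoC 1.

Lemma W_ind i a l : W (indz i a) l = Cpow a (nth i l 0%nat).
Proof.
  revert i. induction l; intros i.
  - simpl. destruct i; reflexivity.
  - simpl. destruct i as [|i].
    + unfold indz at 1. simpl. rewrite (W_ext _ (fun _ => RtoC 1)). rewrite W_one. ring.
      intros r. unfold indz. reflexivity.
    + unfold indz at 1. simpl. rewrite Cpow_1. rewrite <- IHl. rewrite Cmult_1_l.
      apply W_ext. intros r. unfold indz. reflexivity.
Qed.

Lemma Cmod_W z l : (forall r, Cmod (z r) <= 1)%R -> (Cmod (W z l) <= 1)%R.
Proof.
  revert z. induction l; intros z H; simpl. rewrite Cmod_1. lra.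
  rewrite Cmod_mult. replace 1%R with (1 * 1)%R by ring.
  apply Rmult_le_compat; try apply Cmod_ge_0. apply Cmod_Cpow_le, H. apply IHl. intros; apply H.
Qed.

Lemma Zc_mult f g n : Zc (fun r => f r * g r) n = Zc f n * Zc g n.
Proof. induction n; simpl. ring. rewrite IHn. ring. Qed.

Lemma Zc_ind i a n : Zc (indz i a) n = if Nat.ltb i n then a else RtoC 1.
Proof.
  induction n; simpl. destruct i; reflexivity.
  rewrite IHn. unfold indz.
  destruct (Nat.ltb_spec i n); destruct (Nat.eqb_spec n i); destruct (Nat.ltb_spec i (S n)); try lia; ring.
Qed.

Lemma Zc_one n : Zc (fun _ => RtoC 1) n = 1.
Proof. induction n; simpl. reflexivity. rewrite IHn. ring. Qed.

Lemma noninc_cons2 x y l : nonincreasing (x :: y :: l) = Nat.leb y x && nonincreasing (y :: l).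
Proof. reflexivity. Qed.

Lemma noninc_app0 l : nonincreasing (l ++ 0%nat :: nil) = nonincreasing l.
Proof.
  induction l as [|x l IH]. reflexivity.
  destruct l as [|y l']. simpl. reflexivity.
  change ((x :: y :: l') ++ 0%nat :: nil) with (x :: y :: (l' ++ 0%nat :: nil)).
  rewrite noninc_cons2. rewrite noninc_cons2. f_equal. exact IH.
Qed.

Lemma noninc_app_ge l x : nonincreasing (l ++ x :: nil) = true -> forall y, In y l -> (x <= y)%nat.
Proof.
  induction l as [|a l IH]; intros H y Hy. destruct Hy.
  destruct l as [|b l'].
  - simpl in H. apply andb_true_iff in H as [H _]. apply Nat.leb_le in H.
    destruct Hy as [<-|[]]. exact H.
  - change ((a :: b :: l') ++ x :: nil) with (a :: b :: (l' ++ x :: nil)) in H.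
    rewrite noninc_cons2 in H. apply andb_true_iff in H as [H1 H2]. apply Nat.leb_le in H1.
    destruct Hy as [<-|Hy].
    + assert (x <= b)%nat by (apply IH; [exact H2|left; reflexivity]). lia.
    + apply IH; assumption.
Qed.

Lemma noninc_mapS l : nonincreasing (map S l) = nonincreasing l.
Proof.
  induction l as [|x l IH]. reflexivity.
  destruct l as [|y l']. reflexivity.
  change (map S (x :: y :: l')) with (S x :: S y :: map S l').
  rewrite !noninc_cons2. rewrite <- IH. reflexivity.
Qed.

Lemma sum_mapS l : Defs.list_sum (map S l) = (Defs.list_sum l + length l)%nat.
Proof. induction l; simpl. reflexivity. unfold Defs.list_sum in *. simpl. rewrite IHl. lia. Qed.

Lemma sum_app1 l x : Defs.list_sum (l ++ x :: nil) = (Defs.list_sum l + x)%nat.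
Proof. induction l; simpl. unfold Defs.list_sum. simpl. lia. unfold Defs.list_sum in *. simpl. rewrite IHl. lia. Qed.

Lemma In_le_sum x l : In x l -> (x <= Defs.list_sum l)%nat.
Proof. induction l; simpl; intros H. destruct H. unfold Defs.list_sum in *. simpl. destruct H. lia. specialize (IHl H). lia. Qed.

Lemma allpos_len l : allpos l = true -> (length l <= Defs.list_sum l)%nat.
Proof.
  induction l; simpl; intros H. lia. unfold allpos in H. simpl in H.
  apply andb_true_iff in H as [H1 H2]. apply Nat.ltb_lt in H1. specialize (IHl H2).
  unfold Defs.list_sum in *. simpl. lia.
Qed.

Lemma allpos_app_S l y : nonincreasing (l ++ S y :: nil) = true -> allpos (l ++ S y :: nil) = true.
Proof.
  intros H. pose proof (noninc_app_ge _ _ H) as G. unfold allpos. apply forallb_forall.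
  intros x Hx. apply in_app_or in Hx. apply Nat.ltb_lt. destruct Hx as [Hx|[<-|[]]].
  specialize (G x Hx). lia. lia.
Qed.

Definition acoef (z : nat -> C) (k n : nat) : C :=
  sumBL k n (fun l => if nonincreasing l && Nat.eqb (Defs.list_sum l) n then W z l else 0).

Lemma acoef_0 z n : acoef z 0 n = if Nat.eqb n 0 then RtoC 1 else 0.
Proof.
  unfold acoef. simpl. destruct n; reflexivity.
Qed.

Lemma allpos_app0 l : allpos (l ++ 0%nat :: nil) = false.
Proof. unfold allpos. rewrite forallb_app. simpl. apply andb_false_r. Qed.

Lemma acoef_S z k n : acoef z (S k) n =
  acoef z k n + (if Nat.leb (S k) n then Zc z (S k) * acoef z (S k) (n - S k) else 0).
Proof.
  set (F := fun l => if nonincreasing l && Nat.eqb (Defs.list_sum l) n then W z l else RtoC 0).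
  unfold acoef. fold F.
  rewrite (sumBL_ext (S k) n F (fun l => (if allpos l then F l else 0) + (if allpos l then 0 else F l)))
    by (intros l _; destruct (allpos l); [rewrite Cplus_0_r|rewrite Cplus_0_l]; reflexivity).
  rewrite sumBL_plus. rewrite Cplus_comm. f_equal.
  - rewrite sumBL_last. apply sumBL_ext. intros l _. rewrite fsum_S.
    rewrite allpos_app0.
    transitivity (F l + 0); [|ring]. f_equal.
    + unfold F. rewrite noninc_app0, sum_app1, Nat.add_0_r, W_app1. simpl Cpow.
      destruct (_ && _); cbv iota; ring.
    + transitivity (fsum (fun _ => RtoC 0) n); [|apply fsum_zero].
      apply fsum_ext. intros y _. destruct (nonincreasing (l ++ S y :: nil)) eqn:E.
      * rewrite (allpos_app_S _ _ E). reflexivity.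
      * destruct (allpos _); [reflexivity|]. unfold F. rewrite E. reflexivity.
  - destruct n as [|n'].
    + simpl Nat.leb. cbv iota. transitivity (sumBL (S k) 0 (fun _ => RtoC 0)); [|apply sumBL_zero].
      apply sumBL_ext. intros l [Hl _]. destruct (allpos l) eqn:E; [|reflexivity].
      pose proof (allpos_len _ E). unfold F.
      destruct (Nat.eqb_spec (Defs.list_sum l) 0). lia. rewrite andb_false_r. reflexivity.
    + rewrite (sumBL_shift (S k) n' F).
      destruct (Nat.leb_spec (S k) (S n')) as [Hk|Hk].
      * set (G := fun l => if nonincreasing l && Nat.eqb (Defs.list_sum l) (S n' - S k) then W z l else RtoC 0).
        rewrite (sumBL_ext (S k) n' (fun L => F (map S L)) (fun L => Zc z (S k) * G L)).
        rewrite sumBL_scal. f_equal. apply sumBL_bound. lia.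
        intros l [x [Hx Hx']]. pose proof (In_le_sum _ _ Hx). unfold G.
        destruct (Nat.eqb_spec (Defs.list_sum l) (S n' - S k)). lia. rewrite andb_false_r. reflexivity.
        intros L [HL _]. unfold F, G. rewrite noninc_mapS, sum_mapS, W_mapS, HL.
        destruct (nonincreasing L); rewrite ?andb_true_l, ?andb_false_l; [|ring].
        destruct (Nat.eqb_spec (Defs.list_sum L + S k) (S n'));
        destruct (Nat.eqb_spec (Defs.list_sum L) (S n' - S k)); try lia; ring.
      * transitivity (sumBL (S k) n' (fun _ => RtoC 0)); [|apply sumBL_zero].
        apply sumBL_ext. intros L [HL _]. unfold F. rewrite sum_mapS, HL.
        destruct (Nat.eqb_spec (Defs.list_sum L + S k) (S n')). lia. rewrite andb_false_r. reflexivity.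
Qed.

Definition cnt (k n : nat) : R :=
  sumBLR k n (fun l => if nonincreasing l && Nat.eqb (Defs.list_sum l) n then 1%R else 0%R).

Lemma acoef_one k n : acoef (fun _ => RtoC 1) k n = RtoC (cnt k n).
Proof.
  unfold acoef, cnt. rewrite <- sumBL_RtoC. apply sumBL_ext. intros l _.
  rewrite W_one. destruct (_ && _); reflexivity.
Qed.

Lemma acoef_Cmod z k n : (forall r, Cmod (z r) <= 1)%R -> (Cmod (acoef z k n) <= cnt k n)%R.
Proof.
  intros H. unfold acoef, cnt. eapply Rle_trans; [apply sumBL_Cmod|]. apply sumBLR_le.
  intros l. destruct (_ && _). apply Cmod_W, H. rewrite Cmod_0. lra.
Qed.

Lemma cnt_nonneg k n : (0 <= cnt k n)%R.
Proof. unfold cnt. apply sumBLR_nonneg. intros l. destruct (_ && _); lra. Qed.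

Lemma cnt_S k n : cnt (S k) n = (cnt k n + (if Nat.leb (S k) n then cnt (S k) (n - S k) else 0))%R.
Proof.
  apply RtoC_inj. rewrite RtoC_plus. rewrite <- !acoef_one. rewrite acoef_S, Zc_one.
  destruct (Nat.leb _ _). rewrite <- acoef_one. ring. ring.
Qed.

Lemma cnt_0 n : cnt 0 n = if Nat.eqb n 0 then 1%R else 0%R.
Proof. unfold cnt. simpl. destruct n; reflexivity. Qed.

Lemma cnt_pad k n : (n <= k)%nat -> cnt k n = cnt n n.
Proof.
  intros H. induction H. reflexivity. rewrite cnt_S. destruct (Nat.leb_spec (S m) n). lia.
  rewrite IHle. ring.
Qed.

Lemma acoef_pad z k n : (n <= k)%nat -> acoef z k n = acoef z n n.
Proof.
  intros H. induction H. reflexivity. rewrite acoef_S. destruct (Nat.leb_spec (S m) n). lia.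
  rewrite IHle. ring.
Qed.

Lemma cnt_mono k k' n : (k <= k')%nat -> (cnt k n <= cnt k' n)%R.
Proof.
  intros H. induction H. lra. rewrite cnt_S. destruct (Nat.leb _ _).
  pose proof (cnt_nonneg (S m) (n - S m)). lra. lra.
Qed.

Lemma fsumR_plus g h n : fsumR (fun k => g k + h k)%R n = (fsumR g n + fsumR h n)%R.
Proof. induction n; simpl. ring. rewrite IHn. ring. Qed.

Lemma fsumR_scal c g n : fsumR (fun k => c * g k)%R n = (c * fsumR g n)%R.
Proof. induction n; simpl. ring. rewrite IHn. ring. Qed.

Lemma fsumR_zero n : fsumR (fun _ => 0%R) n = 0%R.
Proof. induction n; simpl. reflexivity. rewrite IHn. ring. Qed.

Lemma fsumR_shift_eq (h : nat -> R) s M :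
  fsumR (fun n => if Nat.leb s n then h (n - s)%nat else 0%R) (s + M) = fsumR h M.
Proof.
  induction M.
  - rewrite Nat.add_0_r. induction s as [|s' _]. reflexivity.
    transitivity (fsumR (fun _ => 0%R) (S s')).
    apply fsumR_ext. intros k Hk. destruct (Nat.leb_spec (S s') k). lia. reflexivity.
    simpl fsumR at 2. apply fsumR_zero.
  - rewrite Nat.add_succ_r. simpl. rewrite IHM. destruct (Nat.leb_spec s (s + M)). 2: lia.
    replace (s + M - s)%nat with M by lia. reflexivity.
Qed.

Lemma fsumR_shift_small (h : nat -> R) s M : (M <= s)%nat ->
  fsumR (fun n => if Nat.leb s n then h (n - s)%nat else 0%R) M = 0%R.
Proof.
  induction M; intros H. reflexivity. simpl. rewrite IHM by lia.
  destruct (Nat.leb_spec s M). lia. ring.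
Qed.

Lemma shift_le (g : nat -> R) (x : R) s M : (0 <= x)%R -> (forall n, 0 <= g n)%R ->
  (fsumR (fun n => if Nat.leb s n then (g (n - s)%nat * x ^ n)%R else 0%R) M
   <= x ^ s * fsumR (fun n => g n * x ^ n)%R M)%R.
Proof.
  intros Hx Hg.
  assert (Hnn : (0 <= x ^ s * fsumR (fun n => g n * x ^ n)%R M)%R).
  { apply Rmult_le_pos. apply pow_le, Hx. apply fsumR_nonneg. intros; apply Rmult_le_pos; auto. apply pow_le, Hx. }
  assert (E1 : fsumR (fun n => if Nat.leb s n then (g (n - s)%nat * x ^ n)%R else 0%R) M
     = fsumR (fun n => if Nat.leb s n then (g (n - s)%nat * x ^ (n - s + s))%R else 0%R) M).
  { apply fsumR_ext. intros k _. destruct (Nat.leb_spec s k). f_equal. f_equal. lia. reflexivity. }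
  rewrite E1. clear E1.
  destruct (Nat.le_gt_cases M s).
  - pose proof (fsumR_shift_small (fun m => (g m * x ^ (m + s))%R) s M H) as E. cbv beta in E.
    rewrite E. exact Hnn.
  - pose proof (fsumR_shift_eq (fun m => (g m * x ^ (m + s))%R) s (M - s)) as E. cbv beta in E.
    replace (s + (M - s))%nat with M in E by lia. rewrite E.
    rewrite (fsumR_ext _ (fun m => x ^ s * (g m * x ^ m))%R).
    rewrite fsumR_scal. apply Rmult_le_compat_l. apply pow_le, Hx.
    apply fsumR_mono. intros; apply Rmult_le_pos; auto. apply pow_le, Hx. lia.
    intros m _. rewrite pow_add. ring.
Qed.

Definition SR (x : R) k M := fsumR (fun n => cnt k n * x ^ n)%R M.

Lemma SR_nonneg x k M : (0 <= x)%R -> (0 <= SR x k M)%R.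
Proof. intros. apply fsumR_nonneg. intros. apply Rmult_le_pos. apply cnt_nonneg. apply pow_le; auto. Qed.

Lemma SR_step x k M : (0 <= x)%R -> (SR x (S k) M <= SR x k M + x ^ (S k) * SR x (S k) M)%R.
Proof.
  intros Hx. unfold SR at 1.
  rewrite (fsumR_ext _ (fun n => cnt k n * x ^ n + (if Nat.leb (S k) n then (cnt (S k) (n - S k) * x ^ n) else 0))%R).
  rewrite fsumR_plus. apply Rplus_le_compat_l. apply shift_le; auto. intros; apply cnt_nonneg.
  intros n _. rewrite cnt_S. destruct (Nat.leb _ _); ring.
Qed.

Lemma exp_le_mono a b : (a <= b)%R -> (exp a <= exp b)%R.
Proof. intros [H|H]. left; apply exp_increasing, H. rewrite H; lra. Qed.

Lemma powle1 x k : (0 <= x <= 1)%R -> (x ^ k <= 1)%R.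
Proof.
  intros H. induction k. simpl; lra. change (x ^ S k)%R with (x * x ^ k)%R.
  assert (0 <= x ^ k)%R by (apply pow_le; lra). nra.
Qed.

Lemma SR_bound x k M : (0 <= x < 1)%R ->
  (SR x k M <= exp (fsumR (fun s => x ^ (S s))%R k / (1 - x)))%R.
Proof.
  intros Hx. induction k.
  - simpl fsumR. unfold Rdiv. rewrite Rmult_0_l, exp_0.
    assert (E : SR x 0 M = if Nat.eqb M 0 then 0%R else 1%R).
    { unfold SR. induction M. reflexivity. simpl fsumR. rewrite IHM, cnt_0.
      destruct M; simpl; ring. }
    rewrite E. destruct (Nat.eqb M 0); lra.
  - pose proof (SR_step x k M (proj1 Hx)) as St.
    set (y := (x ^ S k)%R) in *.
    assert (Hy0 : (0 <= y)%R) by (apply pow_le; lra).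
    assert (Hyx : (y <= x)%R).
    { unfold y. change (x ^ S k)%R with (x * x ^ k)%R.
      assert (x ^ k <= 1)%R by (apply powle1; lra).
      assert (0 <= x ^ k)%R by (apply pow_le; lra). nra. }
    assert (Hy1 : (y < 1)%R) by lra.
    assert (Hs : (SR x (S k) M * (1 - y) <= SR x k M)%R) by lra.
    assert (Hs' : (SR x (S k) M <= SR x k M / (1 - y))%R).
    { apply (Rmult_le_reg_r (1 - y)). lra. unfold Rdiv. rewrite Rmult_assoc, Rinv_l by lra. lra. }
    eapply Rle_trans; [exact Hs'|]. cbn [fsumR]. fold y.
    replace ((fsumR (fun s => x ^ S s) k + y) / (1 - x))%R
      with (fsumR (fun s => x ^ S s) k / (1 - x) + y / (1 - x))%R by (unfold Rdiv; ring).
    rewrite exp_plus. unfold Rdiv at 1. apply Rmult_le_compat.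
    apply SR_nonneg; lra. left. apply Rinv_0_lt_compat. lra. exact IHk.
    eapply Rle_trans; [|apply exp_le_mono with (a := (y / (1 - y))%R)].
    + eapply Rle_trans; [|apply exp_ineq1_le]. right. field. lra.
    + unfold Rdiv. apply Rmult_le_compat_l; auto. apply Rinv_le_contravar; lra.
Qed.

Lemma geom_fin x k : (fsumR (fun s => x ^ (S s))%R k * (1 - x) = x - x ^ (S k))%R.
Proof. induction k; cbn [fsumR]. simpl. ring. rewrite Rmult_plus_distr_r, IHk. simpl. ring. Qed.

Definition Kx (x : R) := exp (x / ((1 - x) * (1 - x))).

Lemma SR_bound' x k M : (0 <= x < 1)%R -> (SR x k M <= Kx x)%R.
Proof.
  intros Hx. eapply Rle_trans; [apply SR_bound; auto|]. apply exp_le_mono.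
  assert (H : (fsumR (fun s => x ^ (S s))%R k <= x / (1 - x))%R).
  { pose proof (geom_fin x k) as G. assert (0 <= x ^ S k)%R by (apply pow_le; lra).
    apply (Rmult_le_reg_r (1 - x)). lra. rewrite G. unfold Rdiv. rewrite Rmult_assoc, Rinv_l by lra. lra. }
  replace (x / ((1 - x) * (1 - x)))%R with (x / (1 - x) / (1 - x))%R by (field; lra).
  unfold Rdiv at 1 3. apply Rmult_le_compat_r. left; apply Rinv_0_lt_compat; lra. exact H.
Qed.

Definition Pn (n : nat) : R := cnt n n.

Lemma Pn_nonneg n : (0 <= Pn n)%R.
Proof. apply cnt_nonneg. Qed.

Lemma Pn_partial x M : (0 <= x < 1)%R -> (fsumR (fun n => Pn n * x ^ n)%R M <= Kx x)%R.
Proof.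
  intros Hx. eapply Rle_trans; [|apply (SR_bound' x M M Hx)]. right.
  unfold SR. apply fsumR_ext. intros n Hn. unfold Pn. rewrite (cnt_pad M n) by lia. reflexivity.
Qed.

Lemma Pn_series x : (0 <= x < 1)%R -> ex_series (fun n => Pn n * x ^ n)%R.
Proof.
  intros Hx.
  assert (E : ex_finite_lim_seq (fun M => fsumR (fun n => Pn n * x ^ n)%R M)).
  { apply ex_finite_lim_seq_incr with (M := Kx x).
    - intros n. simpl. assert (0 <= Pn n * x ^ n)%R by (apply Rmult_le_pos; [apply Pn_nonneg|apply pow_le; lra]). lra.
    - intros n. apply Pn_partial, Hx. }
  destruct E as [l Hl]. exists l. unfold is_series.
  apply is_lim_seq_incr_1 in Hl. eapply is_lim_seq_ext in Hl. exact Hl.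
  intros n. simpl. rewrite sum_n_fsumR. reflexivity.
Qed.

Lemma issR_scal_l (c : R) (a : nat -> R) (l : R) :
  is_series a l -> is_series (fun n => c * a n)%R (c * l)%R.
Proof. intros H. apply (is_series_scal c a l H). Qed.

Lemma issR_scal_r (c : R) (a : nat -> R) (l : R) :
  is_series a l -> is_series (fun n => a n * c)%R (l * c)%R.
Proof.
  intros H. rewrite Rmult_comm. eapply is_series_ext; [|apply (issR_scal_l c a l H)].
  intros; simpl; ring.
Qed.

Lemma issR_shiftn (p : nat -> R) (T : R) n :
  is_series p T -> is_series (fun m => p (n + m)%nat) (T - fsumR p n)%R.
Proof.
  intros H. destruct n as [|n].
  - simpl. replace (T - 0)%R with T by ring. eapply is_series_ext; [|exact H]. intros; reflexivity.
  - apply is_series_incr_n. lia. simpl pred. rewrite sum_n_fsumR.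
    match goal with |- is_series _ ?x => replace x with T end. exact H.
    change (T = T - fsumR p (S n) + fsumR p (S n))%R. ring.
Qed.

Lemma cvC_S_inv u l : cvC u l -> cvC (fun n => u (S n)) l.
Proof.
  unfold cvC. intros H. rewrite <- is_lim_seq_spec in *. intros eps.
  destruct (H eps) as [M HM]. exists M. intros n Hn. apply HM. lia.
Qed.

Lemma iss_shiftn_inv (a : nat -> C) (l : C) n : iss a l -> iss (fun k => a (n + k)%nat) (l - fsum a n).
Proof.
  revert a l. induction n; intros a l H.
  - simpl. replace (l - RtoC 0) with l by ring. eapply iss_ext; [|exact H]. intros; reflexivity.
  - pose proof (IHn a l H) as H1. apply iss_shift_inv in H1. cbv beta in H1.
    rewrite Nat.add_0_r in H1. simpl fsum.
    replace (l - (fsum a n + a n)) with (l - fsum a n - a n) by ring.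
    eapply iss_ext; [|exact H1]. intros k. cbv beta. f_equal. lia.
Qed.

Lemma iss_fsum (f : nat -> nat -> C) (s : nat -> C) N :
  (forall n, (n < N)%nat -> iss (f n) (s n)) -> iss (fun m => fsum (fun n => f n m) N) (fsum s N).
Proof.
  induction N; intros H.
  - simpl. apply iss_zero.
  - simpl. apply iss_plus. apply IHN. intros; apply H; lia. apply H; lia.
Qed.

Lemma issR_lim0 (p : nat -> R) T : is_series p T -> is_lim_seq (fun N => T - fsumR p N)%R 0%R.
Proof.
  intros H. apply issR_lim in H.
  replace (Finite 0%R) with (Rbar_minus T T) by (simpl; f_equal; ring).
  apply is_lim_seq_minus'; [apply is_lim_seq_const|exact H].
Qed.

Section Fubini.
Variables (u : nat -> nat -> C) (al be : nat -> R) (Al Be : R).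
Hypothesis Hu : forall n m, (Cmod (u n m) <= al n * be m)%R.
Hypothesis Hal : is_series al Al.
Hypothesis Hbe : is_series be Be.
Hypothesis Hal0 : forall n, (0 <= al n)%R.
Hypothesis Hbe0 : forall m, (0 <= be m)%R.

Lemma fub_row n : iss (u n) (csum (u n)).
Proof.
  apply iss_csum. apply (iss_abs _ (fun m => al n * be m)%R). intros; apply Hu.
  eexists. apply issR_scal_l, Hbe.
Qed.

Lemma fub_col m : iss (fun n => u n m) (csum (fun n => u n m)).
Proof.
  apply iss_csum. apply (iss_abs _ (fun n => al n * be m)%R). intros; apply Hu.
  eexists. apply issR_scal_r, Hal.
Qed.

Lemma fub_row_bound n : (Cmod (csum (u n)) <= al n * Be)%R.
Proof. eapply iss_bound. apply fub_row. apply issR_scal_l, Hbe. intros; apply Hu. Qed.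

Lemma fub_col_bound m : (Cmod (csum (fun n => u n m)) <= Al * be m)%R.
Proof. eapply iss_bound. apply fub_col. apply issR_scal_r, Hal. intros; apply Hu. Qed.

Lemma fubini_iss : exists L, iss (fun n => csum (u n)) L /\ iss (fun m => csum (fun n => u n m)) L.
Proof.
  destruct (iss_abs (fun m => csum (fun n => u n m)) (fun m => Al * be m)%R) as [L HL].
  apply fub_col_bound. eexists; apply issR_scal_l, Hbe.
  exists L. split; [|exact HL].
  apply iss_cvC. eapply cvC_ext. intros N. symmetry. apply sum_n_fsum.
  apply cvC_S_inv.
  apply cvC_le with (b := fun N => ((Al - fsumR al N) * Be)%R).
  - intros N.
    assert (E1 : iss (fun m => fsum (fun n => u n m) N) (fsum (fun n => csum (u n)) N)).
    { apply iss_fsum. intros; apply fub_row. }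
    assert (E2 := iss_minus _ _ _ _ HL E1).
    match goal with |- (Cmod (?x - ?y) <= _)%R => replace (x - y) with (- (y - x)) by ring end.
    rewrite Cmod_opp.
    eapply iss_bound; [exact E2| |].
    + apply issR_scal_l, Hbe.
    + intros m. cbv beta.
      assert (E3 := iss_shiftn_inv _ _ N (fub_col m)).
      eapply iss_bound; [exact E3| |].
      * apply issR_scal_r. apply issR_shiftn. exact Hal.
      * intros n. apply Hu.
  - eapply is_lim_seq_ext. intros N. apply Rmult_comm.
    replace (Finite 0%R) with (Rbar_mult Be 0%R) by (simpl; f_equal; ring).
    apply is_lim_seq_scal_l. apply issR_lim0, Hal.
Qed.

Lemma fubini : csum (fun n => csum (u n)) = csum (fun m => csum (fun n => u n m)).
Proof.
  destruct fubini_iss as [L [H1 H2]]. rewrite (csum_spec _ _ H1), (csum_spec _ _ H2). reflexivity.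
Qed.

End Fubini.

Lemma qpoch_S a v r : qpoch a v (S r) = qpoch a v r * (1 - a * Cpow v r).
Proof. reflexivity. Qed.

Lemma Cmod_Cpow (c : C) n : Cmod (Cpow c n) = (Cmod c ^ n)%R.
Proof. induction n; simpl. apply Cmod_1. rewrite Cmod_mult, IHn. reflexivity. Qed.

Lemma geomR_fin x k : (fsumR (fun s => x ^ s)%R k * (1 - x) = 1 - x ^ k)%R.
Proof. induction k; cbn [fsumR]. simpl. ring. rewrite Rmult_plus_distr_r, IHk. simpl. ring. Qed.

Lemma qpoch_bound a v r : (Cmod v < 1)%R ->
  (Cmod (qpoch a v r) <= exp (Cmod a * fsumR (fun s => Cmod v ^ s)%R r))%R.
Proof.
  intros Hv. induction r.
  - simpl. rewrite Cmod_1, Rmult_0_r, exp_0. lra.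
  - rewrite qpoch_S, Cmod_mult. cbn [fsumR].
    rewrite Rmult_plus_distr_l, exp_plus. apply Rmult_le_compat; try apply Cmod_ge_0. exact IHr.
    eapply Rle_trans; [|apply exp_ineq1_le].
    eapply Rle_trans. replace (1 - a * Cpow v r) with (RtoC 1 + (- (a * Cpow v r))) by ring. apply Cmod_triangle.
    rewrite Cmod_1, Cmod_opp, Cmod_mult, Cmod_Cpow. lra.
Qed.

Lemma exp_le_mono' a b : (a <= b)%R -> (exp a <= exp b)%R.
Proof. intros [H|H]. left; apply exp_increasing, H. rewrite H; lra. Qed.

Lemma qpoch_bound' a v r : (Cmod v < 1)%R ->
  (Cmod (qpoch a v r) <= exp (Cmod a / (1 - Cmod v)))%R.
Proof.
  intros Hv. eapply Rle_trans; [apply qpoch_bound; auto|]. apply exp_le_mono'.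
  pose proof (Cmod_ge_0 v). pose proof (Cmod_ge_0 a).
  assert (fsumR (fun s => Cmod v ^ s)%R r <= / (1 - Cmod v))%R.
  { pose proof (geomR_fin (Cmod v) r) as G. assert (0 <= Cmod v ^ r)%R by (apply pow_le; lra).
    apply (Rmult_le_reg_r (1 - Cmod v)). lra. rewrite G, Rinv_l by lra. lra. }
  unfold Rdiv. apply Rmult_le_compat_l; auto.
Qed.

Lemma tele (u : nat -> C) n : fsum (fun s => u (S s) - u s) n = u n - u 0%nat.
Proof. induction n; simpl. ring. rewrite IHn. ring. Qed.

Lemma qpoch_cv a v : (Cmod v < 1)%R -> exists l, cvC (qpoch a v) l.
Proof.
  intros Hv. set (M := exp (Cmod a / (1 - Cmod v))).
  destruct (iss_abs (fun s => qpoch a v (S s) - qpoch a v s) (fun s => M * Cmod a * Cmod v ^ s)%R) as [D HD].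
  - intros s. rewrite qpoch_S.
    replace (qpoch a v s * (1 - a * Cpow v s) - qpoch a v s) with (- (qpoch a v s * a * Cpow v s)) by ring.
    rewrite Cmod_opp, !Cmod_mult, Cmod_Cpow. apply Rmult_le_compat_r. apply pow_le, Cmod_ge_0.
    apply Rmult_le_compat_r. apply Cmod_ge_0. apply qpoch_bound', Hv.
  - eexists. apply issR_scal_l. apply is_series_geom. rewrite Rabs_pos_eq. exact Hv. apply Cmod_ge_0.
  - exists (1 + D). apply cvC_S. apply iss_cvC in HD.
    eapply cvC_ext; [|apply (cvC_plus _ _ _ _ (cvC_const (RtoC 1)) HD)].
    intros n. cbv beta. rewrite sum_n_fsum, tele. simpl qpoch at 2. ring.
Qed.

Lemma qpoch_inf_cv a v : (Cmod v < 1)%R -> cvC (qpoch a v) (qpoch_inf a v).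
Proof.
  intros Hv. destruct (qpoch_cv a v Hv) as [l Hl]. unfold qpoch_inf.
  assert (Hl' : cvC (fun r => qpoch a v r) l) by exact Hl. rewrite (clim_spec _ _ Hl'). exact Hl.
Qed.

Lemma qpoch_nz a v r : (Cmod a < 1)%R -> (Cmod v <= 1)%R -> qpoch a v r <> 0.
Proof.
  intros Ha Hv. induction r. simpl. intros H. injection H. lra.
  rewrite qpoch_S. apply Cmult_neq_0. exact IHr.
  intros H. assert (E : a * Cpow v r = 1) by (rewrite <- (Cplus_0_l (a * Cpow v r)), <- H; ring).
  apply (f_equal Cmod) in E. rewrite Cmod_mult, Cmod_Cpow, Cmod_1 in E.
  assert (Cmod v ^ r <= 1)%R.
  { clear -Hv. induction r. simpl; lra. simpl. pose proof (Cmod_ge_0 v).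
    assert (0 <= Cmod v ^ r)%R by (apply pow_le; auto). nra. }
  pose proof (Cmod_ge_0 a). assert (0 <= Cmod v ^ r)%R by (apply pow_le, Cmod_ge_0). nra.
Qed.

Lemma cnt_le_Pn k n : (cnt k n <= Pn n)%R.
Proof.
  unfold Pn. destruct (Nat.le_gt_cases k n).
  apply cnt_mono; auto. rewrite (cnt_pad k n) by lia. lra.
Qed.

Fixpoint Pprod (z : nat -> C) (v : C) (k : nat) : C :=
  match k with O => RtoC 1 | S k => Pprod z v k * (1 - Zc z (S k) * Cpow v (S k)) end.

Lemma Pprod_seg z v c m1 m2 : (m1 <= m2)%nat -> (forall s, (m1 <= s < m2)%nat -> Zc z (S s) = c) ->
  Pprod z v m2 * qpoch (v * c) v m1 = Pprod z v m1 * qpoch (v * c) v m2.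
Proof.
  intros Hm H. induction Hm. ring.
  cbn [Pprod]. rewrite qpoch_S. rewrite H by lia.
  replace (Pprod z v m * (1 - c * Cpow v (S m)) * qpoch (v * c) v m1)
    with (Pprod z v m * qpoch (v * c) v m1 * (1 - c * Cpow v (S m))) by ring.
  rewrite IHHm by (intros; apply H; lia). simpl Cpow. ring.
Qed.

Section GF.
Variables (z : nat -> C) (v : C).
Hypothesis Hz : forall r, (Cmod (z r) <= 1)%R.
Hypothesis Hv : (Cmod v < 1)%R.

Definition term k n := acoef z k n * Cpow v n.
Definition Aser k := csum (term k).
Definition Ainf := csum (fun n => acoef z n n * Cpow v n).
Definition pser n := (Pn n * Cmod v ^ n)%R.

Lemma pser_ex : ex_series pser.
Proof. apply Pn_series. split. apply Cmod_ge_0. exact Hv. Qed.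

Lemma acoef_bound k n : (Cmod (acoef z k n) <= Pn n)%R.
Proof. eapply Rle_trans; [apply acoef_Cmod, Hz|apply cnt_le_Pn]. Qed.

Lemma term_bound k n : (Cmod (term k n) <= pser n)%R.
Proof.
  unfold term, pser. rewrite Cmod_mult, Cmod_Cpow. apply Rmult_le_compat_r.
  apply pow_le, Cmod_ge_0. apply acoef_bound.
Qed.

Lemma A_iss k : iss (term k) (Aser k).
Proof. apply iss_csum. eapply iss_abs. apply term_bound. apply pser_ex. Qed.

Lemma Ainf_iss : iss (fun n => acoef z n n * Cpow v n) Ainf.
Proof. apply iss_csum. eapply iss_abs. intros n. apply (term_bound n). apply pser_ex. Qed.

Lemma A0 : Aser 0 = 1.
Proof.
  apply csum_spec. replace (RtoC 1) with (term 0 0 + 0).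
  apply iss_shift. eapply iss_ext; [|apply iss_zero]. intros n. unfold term.
  rewrite acoef_0. simpl. ring.
  unfold term. rewrite acoef_0. simpl. ring.
Qed.

Lemma A_rec k : Aser (S k) * (1 - Zc z (S k) * Cpow v (S k)) = Aser k.
Proof.
  set (c := fun n => if Nat.leb (S k) n then Zc z (S k) * acoef z (S k) (n - S k) * Cpow v n else 0).
  assert (Hc : iss c (Zc z (S k) * Cpow v (S k) * Aser (S k))).
  { replace (Zc z (S k) * Cpow v (S k) * Aser (S k)) with
      (fsum c (S k) + Zc z (S k) * Cpow v (S k) * Aser (S k)).
    apply iss_shiftn. eapply iss_ext; [|apply iss_scal, A_iss].
    intros m. unfold c, term. destruct (Nat.leb_spec (S k) (S k + m)); [|lia].
    replace (S k + m - S k)%nat with m by lia. rewrite Cpow_add. cring.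
    rewrite (fsum_ext _ (fun _ => RtoC 0)). rewrite fsum_zero. ring.
    intros n Hn. unfold c. destruct (Nat.leb_spec (S k) n); [lia|reflexivity]. }
  assert (H2 : iss (term (S k)) (Aser k + Zc z (S k) * Cpow v (S k) * Aser (S k))).
  { eapply iss_ext; [|apply (iss_plus _ _ _ _ (A_iss k) Hc)]. intros n. unfold term, c.
    rewrite (acoef_S z k n). destruct (Nat.leb _ _); cring. }
  pose proof (iss_unique _ _ _ (A_iss (S k)) H2) as E.
  replace (Aser k) with (Aser (S k) - Zc z (S k) * Cpow v (S k) * Aser (S k)). ring.
  rewrite E at 1. ring.
Qed.

Lemma A_P k : Aser k * Pprod z v k = 1.
Proof.
  induction k. simpl. rewrite A0. ring.
  cbn [Pprod]. transitivity (Aser (S k) * (1 - Zc z (S k) * Cpow v (S k)) * Pprod z v k). ring. rewrite A_rec. exact IHk.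
Qed.

Lemma A_lim : cvC Aser Ainf.
Proof.
  destruct pser_ex as [T HT].
  apply cvC_le with (b := fun k => (2 * (T - fsumR pser (S k)))%R).
  - intros k.
    set (d := fun n => term k n - acoef z n n * Cpow v n).
    assert (Hd : iss d (Aser k - Ainf)) by (apply iss_minus; [apply A_iss|apply Ainf_iss]).
    apply (iss_shiftn_inv _ _ (S k)) in Hd.
    rewrite (fsum_ext _ (fun _ => RtoC 0)) in Hd. rewrite fsum_zero in Hd.
    replace (Aser k - Ainf) with (Aser k - Ainf - RtoC 0) by ring.
    eapply iss_bound; [exact Hd| |].
    + apply issR_scal_l. apply issR_shiftn. exact HT.
    + intros n. unfold d, term. cbv beta.
      match goal with |- (Cmod ?x <= _)%R => replace x with ((acoef z k (S k + n) - acoef z (S k + n) (S k + n)) * Cpow v (S k + n)) by ring end.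
      rewrite Cmod_mult, Cmod_Cpow.
      unfold pser. replace (2 * (Pn (S k + n) * Cmod v ^ (S k + n)))%R
        with ((Pn (S k + n) + Pn (S k + n)) * Cmod v ^ (S k + n))%R by ring.
      apply Rmult_le_compat_r. apply pow_le, Cmod_ge_0.
      unfold Cminus. eapply Rle_trans; [apply Cmod_triangle|]. rewrite Cmod_opp.
      apply Rplus_le_compat; apply acoef_bound.
    + intros n Hn. unfold d, term. rewrite (acoef_pad z k n) by lia. ring.
  - replace (Finite 0%R) with (Rbar_mult 2 0%R) by (simpl; f_equal; ring). apply is_lim_seq_scal_l.
    apply (is_lim_seq_incr_1 (fun k => T - fsumR pser k)%R). apply issR_lim0, HT.
Qed.

Lemma GF_main c m : (forall s, (m <= s)%nat -> Zc z (S s) = c) ->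
  Ainf * Pprod z v m * qpoch_inf (v * c) v = qpoch (v * c) v m.
Proof.
  intros H.
  assert (E : forall k, (m <= k)%nat -> Aser k * Pprod z v m * qpoch (v * c) v k = qpoch (v * c) v m).
  { intros k Hk. rewrite <- Cmult_assoc, <- (Pprod_seg z v c m k Hk).
    transitivity (Aser k * Pprod z v k * qpoch (v * c) v m). ring. rewrite A_P. ring.
    intros s Hs. apply H. lia. }
  apply (cvC_unique (fun k => Aser k * Pprod z v m * qpoch (v * c) v k)).
  - apply cvC_mult. apply cvC_mult. apply A_lim. apply cvC_const. apply qpoch_inf_cv, Hv.
  - apply (cvC_ext_ev (fun _ => qpoch (v * c) v m) _ _ m). intros k Hk. symmetry. apply E, Hk.
    apply cvC_const.
Qed.
End GF.

Lemma csum_ext (a b : nat -> C) : (forall n, a n = b n) -> csum a = csum b.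
Proof. intros H. f_equal. apply functional_extensionality. exact H. Qed.

Lemma csum_scal (a : nat -> C) (c l : C) : iss a l -> csum (fun n => c * a n) = c * l.
Proof. intros H. apply csum_spec. apply iss_scal, H. Qed.

Lemma iss_list (L : list (list nat)) (g : list nat -> nat -> C) (s : list nat -> C) :
  (forall x, In x L -> iss (g x) (s x)) ->
  iss (fun i => csum_list (map (fun x => g x i) L)) (csum_list (map s L)).
Proof.
  induction L; intros H; simpl.
  - apply iss_zero.
  - apply iss_plus. apply H; left; auto. apply IHL. intros; apply H; right; auto.
Qed.

Lemma csum_list_scal {X} (c : C) (g : X -> C) L :
  csum_list (map (fun x => c * g x) L) = c * csum_list (map g L).
Proof. induction L; simpl. ring. rewrite IHL. ring. Qed.

Lemma csum_list_ext {X} (g h : X -> C) L : (forall x, g x = h x) ->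
  csum_list (map g L) = csum_list (map h L).
Proof. intros H. induction L; simpl. ring. rewrite IHL, H. ring. Qed.

Lemma csum_list_filter {X} (f : X -> C) (p : X -> bool) L :
  csum_list (map f (filter p L)) = csum_list (map (fun x => if p x then f x else 0) L).
Proof. induction L; simpl. reflexivity. destruct (p a); simpl; rewrite IHL; ring. Qed.

Lemma part_sum z n : csum_list (map (W z) (partitions n)) = acoef z n n.
Proof.
  unfold partitions, acoef. rewrite csum_list_filter. apply sumBL_spec.
Qed.

Definition zz (q1 q2 : C) (i j : nat) : nat -> C := fun r => indz i q1 r * indz j q2 r.

Lemma W_zz q1 q2 i j lam : W (zz q1 q2 i j) lam = Cpow q1 (nth i lam 0%nat) * Cpow q2 (nth j lam 0%nat).
Proof. unfold zz. rewrite W_mult, !W_ind. reflexivity. Qed.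

Lemma Cmod_pow_le1 (q : C) k : (Cmod q < 1)%R -> (Cmod (Cpow q k) <= 1)%R.
Proof. intros H. apply Cmod_Cpow_le. lra. Qed.

Lemma geo_iss (t q : C) (lam : list nat) : (Cmod t < 1)%R -> (Cmod q < 1)%R ->
  iss (fun i => Cpow t i * Cpow q (nth i lam 0%nat)) (csum (fun i => Cpow t i * Cpow q (nth i lam 0%nat))).
Proof.
  intros Ht Hq. apply iss_csum. apply (iss_abs _ (fun i => Cmod t ^ i)%R).
  - intros i. rewrite Cmod_mult, Cmod_Cpow. rewrite <- (Rmult_1_r (Cmod t ^ i)) at 2.
    apply Rmult_le_compat_l. apply pow_le, Cmod_ge_0. apply Cmod_pow_le1, Hq.
  - apply ex_series_geom. rewrite Rabs_pos_eq. exact Ht. apply Cmod_ge_0.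
Qed.

Section Main.
Variables q1 t1 q2 t2 v : C.
Hypothesis hv : (Cmod v < 1)%R.
Hypothesis ht1 : (Cmod t1 < 1)%R.
Hypothesis ht2 : (Cmod t2 < 1)%R.
Hypothesis hq1 : (Cmod q1 < 1)%R.
Hypothesis hq2 : (Cmod q2 < 1)%R.

Definition c0 := / (RtoC 1 - q1) * / (RtoC 1 - q2).
Definition fB (lam : list nat) := Bhat lam q1 t1 * Bhat lam q2 t2.
Definition Fnij (n i j : nat) := Cpow t1 i * Cpow t2 j * acoef (zz q1 q2 i j) n n.

Lemma cn_eq n : csum_list (map fB (partitions n)) =
  c0 * csum (fun i => csum (fun j => Fnij n i j)).
Proof.
  set (L := partitions n).
  set (u1 := fun lam i => Cpow t1 i * Cpow q1 (nth i lam 0%nat)).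
  set (u2 := fun lam j => Cpow t2 j * Cpow q2 (nth j lam 0%nat)).
  assert (H1 : forall lam, iss (u1 lam) (csum (u1 lam))) by (intros; apply geo_iss; auto).
  assert (H2 : forall lam, iss (u2 lam) (csum (u2 lam))) by (intros; apply geo_iss; auto).
  assert (EB : forall lam, fB lam = c0 * (csum (u1 lam) * csum (u2 lam))).
  { intros lam. unfold fB, Bhat, c0. fold (u1 lam). fold (u2 lam). ring. }
  rewrite (csum_list_ext _ _ _ EB), csum_list_scal. f_equal.
  assert (Hi : forall i, iss (fun j => Fnij n i j) (csum_list (map (fun lam => u1 lam i * csum (u2 lam)) L))).
  { intros i. eapply iss_ext; [|apply (iss_list L (fun lam j => u1 lam i * u2 lam j))].
    - intros j. cbv beta. unfold Fnij. rewrite <- part_sum. fold L.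
      rewrite <- csum_list_scal. apply csum_list_ext. intros lam. rewrite W_zz. unfold u1, u2. ring.
    - intros lam _. apply iss_scal, H2. }
  rewrite (csum_ext _ _ (fun i => csum_spec _ _ (Hi i))).
  symmetry. apply csum_spec.
  apply (iss_list L (fun lam i => u1 lam i * csum (u2 lam))).
  intros lam _. apply iss_scal_r, H1.
Qed.

Lemma zz_bound i j r : (Cmod (zz q1 q2 i j r) <= 1)%R.
Proof.
  unfold zz, indz. pose proof (Cmod_ge_0 q1). pose proof (Cmod_ge_0 q2).
  destruct (Nat.eqb r i); destruct (Nat.eqb r j); rewrite Cmod_mult, ?Cmod_1; nra.
Qed.

Definition G3 n i j := Fnij n i j * Cpow v n.

Lemma geomR (x : R) : (0 <= x < 1)%R -> is_series (fun n => x ^ n)%R (/ (1 - x))%R.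
Proof. intros H. apply is_series_geom. rewrite Rabs_pos_eq; lra. Qed.

Lemma G3_bound n i j : (Cmod (G3 n i j) <= (Pn n * Cmod v ^ n) * (Cmod t1 ^ i * Cmod t2 ^ j))%R.
Proof.
  unfold G3, Fnij. rewrite !Cmod_mult, !Cmod_Cpow.
  pose proof (acoef_bound (zz q1 q2 i j) (zz_bound i j) n n).
  pose proof (Cmod_ge_0 (acoef (zz q1 q2 i j) n n)).
  assert (0 <= Cmod t1 ^ i)%R by (apply pow_le, Cmod_ge_0).
  assert (0 <= Cmod t2 ^ j)%R by (apply pow_le, Cmod_ge_0).
  assert (0 <= Cmod v ^ n)%R by (apply pow_le, Cmod_ge_0).
  assert (0 <= Cmod t1 ^ i * Cmod t2 ^ j)%R by (apply Rmult_le_pos; auto).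
  replace (Pn n * Cmod v ^ n * (Cmod t1 ^ i * Cmod t2 ^ j))%R
    with (Cmod t1 ^ i * Cmod t2 ^ j * Pn n * Cmod v ^ n)%R by ring.
  apply Rmult_le_compat_r; auto. apply Rmult_le_compat_l; auto.
Qed.

Lemma Tp_ex : exists Tp, is_series (fun n => Pn n * Cmod v ^ n)%R Tp.
Proof. apply Pn_series. split. apply Cmod_ge_0. exact hv. Qed.

Lemma cv1 : (0 <= Cmod t1 < 1)%R. Proof. split. apply Cmod_ge_0. exact ht1. Qed.
Lemma cv2 : (0 <= Cmod t2 < 1)%R. Proof. split. apply Cmod_ge_0. exact ht2. Qed.

Lemma G3_row n i : iss (G3 n i) (csum (G3 n i)).
Proof.
  apply iss_csum. eapply iss_abs. intros j. apply G3_bound.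
  eexists. apply issR_scal_l, issR_scal_l, geomR, cv2.
Qed.

Lemma G3_row_bound n i : (Cmod (csum (G3 n i)) <= (Pn n * Cmod v ^ n) * (Cmod t1 ^ i * / (1 - Cmod t2)))%R.
Proof.
  eapply iss_bound. apply G3_row. 2: intros j; apply G3_bound.
  rewrite <- Rmult_assoc. eapply is_series_ext; [|apply issR_scal_l, geomR, cv2].
  intros j. cbv beta. rring.
Qed.

Lemma Fnij_bound n i j : (Cmod (Fnij n i j) <= (Pn n * Cmod t1 ^ i) * Cmod t2 ^ j)%R.
Proof.
  unfold Fnij. rewrite !Cmod_mult, !Cmod_Cpow.
  pose proof (acoef_bound (zz q1 q2 i j) (zz_bound i j) n n).
  assert (0 <= Cmod t1 ^ i)%R by (apply pow_le, Cmod_ge_0).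
  assert (0 <= Cmod t2 ^ j)%R by (apply pow_le, Cmod_ge_0).
  assert (0 <= Cmod t1 ^ i * Cmod t2 ^ j)%R by (apply Rmult_le_pos; auto).
  replace (Pn n * Cmod t1 ^ i * Cmod t2 ^ j)%R with ((Cmod t1 ^ i * Cmod t2 ^ j) * Pn n)%R by ring.
  apply Rmult_le_compat_l; auto.
Qed.

Lemma LHS_eq : qavg fB v = qpoch_inf v v * c0 *
  csum (fun i => csum (fun j => Cpow t1 i * Cpow t2 j * Ainf (zz q1 q2 i j) v)).
Proof.
  destruct Tp_ex as [Tp HTp].
  assert (Hal0 : forall n, (0 <= Pn n * Cmod v ^ n)%R).
  { intros. apply Rmult_le_pos. apply Pn_nonneg. apply pow_le, Cmod_ge_0. }
  unfold qavg. rewrite <- Cmult_assoc. f_equal.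
  assert (Eterm : forall n, csum_list (map fB (partitions n)) * Cpow v n =
                          c0 * csum (fun i => csum (G3 n i))).
  { intros n. rewrite cn_eq. rewrite <- Cmult_assoc. f_equal.
    assert (Hr : forall i, iss (fun j => Fnij n i j) (csum (fun j => Fnij n i j))).
    { intros i. apply iss_csum. apply (iss_abs _ (fun j => (Pn n * Cmod t1 ^ i) * Cmod t2 ^ j)%R).
      intros j. apply Fnij_bound.
      eexists. apply issR_scal_l, geomR, cv2. }
    assert (Hr2 : forall i, csum (fun j => Fnij n i j) * Cpow v n = csum (G3 n i)).
    { intros i. symmetry. apply csum_spec. apply iss_scal_r, Hr. }
    assert (Hc : iss (fun i => csum (fun j => Fnij n i j)) (csum (fun i => csum (fun j => Fnij n i j)))).
    { apply iss_csum. apply (iss_abs _ (fun i => (Pn n * / (1 - Cmod t2)) * Cmod t1 ^ i)%R).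
      intros i. eapply iss_bound. apply Hr. 2: { intros j. apply Fnij_bound. }
      replace (Pn n * / (1 - Cmod t2) * Cmod t1 ^ i)%R with ((Pn n * Cmod t1 ^ i) * / (1 - Cmod t2))%R by ring.
      apply issR_scal_l, geomR, cv2.
      eexists. apply issR_scal_l, geomR, cv1. }
    rewrite (csum_ext _ _ (fun i => eq_sym (Hr2 i))).
    symmetry. apply csum_spec. apply iss_scal_r, Hc. }
  rewrite (csum_ext _ _ Eterm).
  set (u := fun n i => csum (G3 n i)).
  destruct (fubini_iss u (fun n => Pn n * Cmod v ^ n)%R (fun i => Cmod t1 ^ i * / (1 - Cmod t2))%R Tp (/ (1 - Cmod t1) * / (1 - Cmod t2))%R)
    as [L1 [HL1 HL1']].
  - intros n i. apply G3_row_bound.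
  - exact HTp.
  - apply issR_scal_r, geomR, cv1.
  - etransitivity; [apply (csum_scal (fun n => csum (u n)) c0 L1 HL1)|]. f_equal.
    symmetry. rewrite <- (csum_spec _ _ HL1'). apply csum_ext. intros i.
    unfold u.
    symmetry. etransitivity; [apply (fubini (fun n j => G3 n i j) (fun n => Pn n * Cmod v ^ n)%R (fun j => Cmod t1 ^ i * Cmod t2 ^ j)%R Tp (Cmod t1 ^ i * / (1 - Cmod t2))%R)|].
    + intros n j. apply G3_bound.
    + exact HTp.
    + apply issR_scal_l, geomR, cv2.
    + apply csum_ext. intros j.
      apply csum_spec. eapply iss_ext; [|apply iss_scal, (Ainf_iss (zz q1 q2 i j) v (zz_bound i j) hv)].
      intros n. unfold G3, Fnij. cbv beta. cring.
Qed.

End Main.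

Lemma fsumR_le_series (g : nat -> R) G n : (forall k, 0 <= g k)%R -> is_series g G -> (fsumR g n <= G)%R.
Proof.
  intros Hg H. apply issR_lim in H.
  assert (Rbar_le (fsumR g n) G).
  { apply (is_lim_seq_le (fun _ => fsumR g n) (fun k => fsumR g (n + k)) (fsumR g n) G).
    - intros k. apply fsumR_mono; auto; lia.
    - apply is_lim_seq_const.
    - apply (is_lim_seq_incr_n (fun k => fsumR g k) n) in H.
      eapply is_lim_seq_ext; [|exact H]. intros k. cbv beta. f_equal. lia. }
  exact H0.
Qed.

Section Split.
Variables (X : nat -> nat -> C) (K a b : R).
Hypothesis Ha : (0 <= a < 1)%R.
Hypothesis Hb : (0 <= b < 1)%R.
Hypothesis HX : forall i j, (Cmod (X i j) <= K * a ^ i * b ^ j)%R.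

Lemma K_nonneg : (0 <= K)%R.
Proof. pose proof (HX 0 0). simpl in H. pose proof (Cmod_ge_0 (X 0%nat 0%nat)). lra. Qed.

Lemma gR x : (0 <= x < 1)%R -> is_series (fun n => x ^ n)%R (/ (1 - x))%R.
Proof. intros H. apply is_series_geom. rewrite Rabs_pos_eq; lra. Qed.

Lemma X_row i : iss (X i) (csum (X i)).
Proof.
  apply iss_csum. apply (iss_abs _ (fun j => (K * a ^ i) * b ^ j)%R). apply HX.
  eexists. apply issR_scal_l, gR, Hb.
Qed.

Lemma X_row_shift i : iss (fun k => X i (k + i + 1)%nat) (csum (fun k => X i (k + i + 1)%nat)).
Proof.
  apply iss_csum. apply (iss_abs _ (fun k => (K * a ^ i * b ^ (i + 1)) * b ^ k)%R).
  intros k. eapply Rle_trans; [apply HX|]. right.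
  replace (k + i + 1)%nat with (i + 1 + k)%nat by lia. rewrite pow_add. ring.
  eexists. apply issR_scal_l, gR, Hb.
Qed.

Lemma X_col_shift j : iss (fun k => X (k + j + 1)%nat j) (csum (fun k => X (k + j + 1)%nat j)).
Proof.
  apply iss_csum. apply (iss_abs _ (fun k => (K * a ^ (j + 1) * b ^ j) * a ^ k)%R).
  intros k. eapply Rle_trans; [apply HX|]. right.
  replace (k + j + 1)%nat with (j + 1 + k)%nat by lia. rewrite pow_add. ring.
  eexists. apply issR_scal_l, gR, Ha.
Qed.

Lemma U_iss : iss (fun i => csum (fun k => X i (k + i + 1)%nat)) (csum (fun i => csum (fun k => X i (k + i + 1)%nat))).
Proof.
  pose proof K_nonneg as HK.
  apply iss_csum. apply (iss_abs _ (fun i => (K / (1 - b)) * a ^ i)%R).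
  intros i. eapply Rle_trans. eapply iss_bound. apply X_row_shift.
  apply (issR_scal_l (K * a ^ i * b ^ (i + 1))%R), gR, Hb.
  intros k. eapply Rle_trans; [apply HX|]. right.
  replace (k + i + 1)%nat with (i + 1 + k)%nat by lia. rewrite pow_add. ring.
  assert (b ^ (i + 1) <= 1)%R by (apply powle1; lra).
  assert (0 <= K * a ^ i)%R by (apply Rmult_le_pos; auto; apply pow_le; lra).
  assert (0 < / (1 - b))%R by (apply Rinv_0_lt_compat; lra).
  unfold Rdiv. replace (K * / (1 - b) * a ^ i)%R with ((K * a ^ i) * 1 * / (1 - b))%R by ring.
  apply Rmult_le_compat_r. lra. apply Rmult_le_compat_l; auto.
  eexists. apply issR_scal_l, gR, Ha.
Qed.

Lemma L_iss : iss (fun j => csum (fun k => X (k + j + 1)%nat j)) (csum (fun j => csum (fun k => X (k + j + 1)%nat j))).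
Proof.
  pose proof K_nonneg as HK.
  apply iss_csum. apply (iss_abs _ (fun j => (K / (1 - a)) * b ^ j)%R).
  intros j. eapply Rle_trans. eapply iss_bound. apply X_col_shift.
  apply (issR_scal_l (K * a ^ (j + 1) * b ^ j)%R), gR, Ha.
  intros k. eapply Rle_trans; [apply HX|]. right.
  replace (k + j + 1)%nat with (j + 1 + k)%nat by lia. rewrite pow_add. ring.
  assert (a ^ (j + 1) <= 1)%R by (apply powle1; lra).
  assert (0 <= K * b ^ j)%R by (apply Rmult_le_pos; auto; apply pow_le; lra).
  assert (0 < / (1 - a))%R by (apply Rinv_0_lt_compat; lra).
  unfold Rdiv. replace (K * a ^ (j + 1) * b ^ j * / (1 - a))%R with ((K * b ^ j) * a ^ (j + 1) * / (1 - a))%R by ring.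
  replace (K * / (1 - a) * b ^ j)%R with ((K * b ^ j) * 1 * / (1 - a))%R by ring.
  apply Rmult_le_compat_r. lra. apply Rmult_le_compat_l; auto.
  eexists. apply issR_scal_l, gR, Hb.
Qed.

Lemma D_iss : iss (fun i => X i i) (csum (fun i => X i i)).
Proof.
  pose proof K_nonneg as HK.
  apply iss_csum. apply (iss_abs _ (fun i => K * a ^ i)%R).
  intros i. eapply Rle_trans; [apply HX|]. rewrite <- (Rmult_1_r (K * a ^ i)) at 2.
  apply Rmult_le_compat_l. apply Rmult_le_pos; auto. apply pow_le; lra.
  apply powle1; lra.
  eexists. apply issR_scal_l, gR, Ha.
Qed.

Lemma split3 :
  csum (fun i => csum (X i)) =
  csum (fun i => csum (fun k => X i (k + i + 1)%nat)) + csum (fun i => X i i) +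
  csum (fun j => csum (fun k => X (k + j + 1)%nat j)).
Proof.
  pose proof K_nonneg as HK.
  assert (Hsplit : forall i, csum (X i) = fsum (X i) i + X i i + csum (fun k => X i (k + i + 1)%nat)).
  { intros i. apply csum_spec.
    replace (fsum (X i) i + X i i + csum (fun k => X i (k + i + 1)%nat))
      with (fsum (X i) (S i) + csum (fun k => X i (k + i + 1)%nat)) by (simpl; ring).
    apply iss_shiftn. eapply iss_ext; [|apply X_row_shift]. intros k. cbv beta. f_equal. lia. }
  assert (HA : iss (fun i => fsum (X i) i) (csum (fun i => fsum (X i) i))).
  { apply iss_csum. apply (iss_abs _ (fun i => (K / (1 - b)) * a ^ i)%R).
    intros i. eapply Rle_trans; [apply fsum_Cmod|].
    eapply Rle_trans; [apply (fsumR_le _ (fun j => (K * a ^ i) * b ^ j)%R); intros; apply HX|].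
    eapply Rle_trans; [apply fsumR_le_series; [|apply issR_scal_l, gR, Hb]|].
    intros k. apply Rmult_le_pos. apply Rmult_le_pos; auto. apply pow_le; lra. apply pow_le; lra.
    right. unfold Rdiv. ring.
    eexists. apply issR_scal_l, gR, Ha. }
  assert (HD : iss (fun i => X i i) (csum (fun i => X i i))).
  { apply iss_csum. apply (iss_abs _ (fun i => K * a ^ i)%R).
    intros i. eapply Rle_trans; [apply HX|]. rewrite <- (Rmult_1_r (K * a ^ i)) at 2.
    apply Rmult_le_compat_l. apply Rmult_le_pos; auto. apply pow_le; lra.
    apply powle1; lra.
    eexists. apply issR_scal_l, gR, Ha. }
  assert (HU : iss (fun i => csum (fun k => X i (k + i + 1)%nat)) (csum (fun i => csum (fun k => X i (k + i + 1)%nat)))).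
  { apply iss_csum. apply (iss_abs _ (fun i => (K / (1 - b)) * a ^ i)%R).
    intros i. eapply Rle_trans. eapply iss_bound. apply X_row_shift.
    apply (issR_scal_l (K * a ^ i * b ^ (i + 1))%R), gR, Hb.
    intros k. eapply Rle_trans; [apply HX|]. right.
    replace (k + i + 1)%nat with (i + 1 + k)%nat by lia. rewrite pow_add. ring.
    assert (b ^ (i + 1) <= 1)%R by (apply powle1; lra).
    assert (0 <= K * a ^ i)%R by (apply Rmult_le_pos; auto; apply pow_le; lra).
    assert (0 < / (1 - b))%R by (apply Rinv_0_lt_compat; lra).
    unfold Rdiv. replace (K * / (1 - b) * a ^ i)%R with ((K * a ^ i) * 1 * / (1 - b))%R by ring.
    apply Rmult_le_compat_r. lra. apply Rmult_le_compat_l; auto.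
    eexists. apply issR_scal_l, gR, Ha. }
  assert (Hmain : csum (fun i => csum (X i)) = csum (fun i => fsum (X i) i) + csum (fun i => X i i) +
                  csum (fun i => csum (fun k => X i (k + i + 1)%nat))).
  { apply csum_spec. eapply iss_ext; [|apply (iss_plus _ _ _ _ (iss_plus _ _ _ _ HA HD) HU)].
    intros i. cbv beta. symmetry. apply Hsplit. }
  rewrite Hmain.
  set (Y := fun i j => if Nat.ltb j i then X i j else RtoC 0).
  assert (HY : forall i, iss (Y i) (fsum (X i) i)).
  { intros i. replace (fsum (X i) i) with (fsum (Y i) i + 0).
    apply iss_shiftn. eapply iss_ext; [|apply iss_zero]. intros k. unfold Y.
    destruct (Nat.ltb_spec (i + k) i). lia. reflexivity.
    rewrite Cplus_0_r. apply fsum_ext. intros k Hk. unfold Y.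
    destruct (Nat.ltb_spec k i). reflexivity. lia. }
  assert (HYc : forall j, iss (fun i => Y i j) (csum (fun k => X (k + j + 1)%nat j))).
  { intros j. replace (csum (fun k => X (k + j + 1)%nat j))
      with (fsum (fun i => Y i j) (S j) + csum (fun k => X (k + j + 1)%nat j)).
    apply iss_shiftn. eapply iss_ext; [|apply X_col_shift]. intros k. unfold Y.
    destruct (Nat.ltb_spec j (S j + k)). f_equal. lia. lia.
    rewrite (fsum_ext _ (fun _ => RtoC 0)). rewrite fsum_zero. ring.
    intros k Hk. unfold Y. destruct (Nat.ltb_spec j k). lia. reflexivity. }
  assert (HF := fubini Y (fun i => K * a ^ i)%R (fun j => b ^ j)%R (K * / (1 - a))%R (/ (1 - b))%R).
  specialize (HF ltac:(intros i j; unfold Y; destruct (Nat.ltb j i); [apply HX|rewrite Cmod_0;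
    apply Rmult_le_pos; [apply Rmult_le_pos; auto; apply pow_le; lra|apply pow_le; lra]])
    ltac:(apply issR_scal_l, gR, Ha) ltac:(apply gR, Hb)).
  rewrite (csum_ext (fun i => fsum (X i) i) (fun i => csum (Y i))) by (intros; symmetry; apply csum_spec, HY).
  rewrite HF. rewrite (csum_ext _ (fun j => csum (fun k => X (k + j + 1)%nat j))).
  ring.
  intros j. apply csum_spec, HYc.
Qed.
End Split.

Section Fin.
Variables q1 t1 q2 t2 v : C.
Hypothesis hv : (Cmod v < 1)%R.
Hypothesis ht1 : (Cmod t1 < 1)%R.
Hypothesis ht2 : (Cmod t2 < 1)%R.
Hypothesis hq1 : (Cmod q1 < 1)%R.
Hypothesis hq2 : (Cmod q2 < 1)%R.

Definition Qi := qpoch_inf (v * q1 * q2) v.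
Definition AZ i j := Ainf (zz q1 q2 i j) v.

Lemma Zc_zz i j n : Zc (zz q1 q2 i j) n = (if Nat.ltb i n then q1 else RtoC 1) * (if Nat.ltb j n then q2 else RtoC 1).
Proof. unfold zz. rewrite Zc_mult, !Zc_ind. reflexivity. Qed.

Lemma Pprod_prefix z m : (forall s, (s < m)%nat -> Zc z (S s) = 1) -> Pprod z v m = qpoch v v m.
Proof.
  intros H. pose proof (Pprod_seg z v (RtoC 1) 0 m ltac:(lia) ltac:(intros; apply H; lia)) as E.
  rewrite Cmult_1_r in E. simpl in E. rewrite Cmult_1_r, Cmult_1_l in E. exact E.
Qed.

Lemma GFzz i j m c : (forall s, (m <= s)%nat -> Zc (zz q1 q2 i j) (S s) = c) ->
  AZ i j * Pprod (zz q1 q2 i j) v m * qpoch_inf (v * c) v = qpoch (v * c) v m.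
Proof. intros H. apply GF_main. apply zz_bound; auto. exact hv. exact H. Qed.

Lemma AZ_lt i j : (i < j)%nat ->
  AZ i j * (qpoch v v i * qpoch (v * q1) v j * Qi) = qpoch (v * q1) v i * qpoch (v * q1 * q2) v j.
Proof.
  intros Hij.
  pose proof (GFzz i j j (q1 * q2)) as GF.
  rewrite Cmult_assoc in GF. fold Qi in GF.
  specialize (GF ltac:(intros s Hs; rewrite Zc_zz; destruct (Nat.ltb_spec i (S s)); destruct (Nat.ltb_spec j (S s)); try lia; reflexivity)).
  pose proof (Pprod_prefix (zz q1 q2 i j) i) as E1.
  specialize (E1 ltac:(intros s Hs; rewrite Zc_zz; destruct (Nat.ltb_spec i (S s)); destruct (Nat.ltb_spec j (S s)); try lia; ring)).
  pose proof (Pprod_seg (zz q1 q2 i j) v q1 i j ltac:(lia)) as E2.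
  specialize (E2 ltac:(intros s Hs; rewrite Zc_zz; destruct (Nat.ltb_spec i (S s)); destruct (Nat.ltb_spec j (S s)); try lia; ring)).
  rewrite <- E1.
  replace (AZ i j * (Pprod (zz q1 q2 i j) v i * qpoch (v * q1) v j * Qi))
    with (AZ i j * (Pprod (zz q1 q2 i j) v i * qpoch (v * q1) v j) * Qi) by ring.
  rewrite <- E2. rewrite <- GF. ring.
Qed.

Lemma AZ_eq i : AZ i i * (qpoch v v i * Qi) = qpoch (v * q1 * q2) v i.
Proof.
  pose proof (GFzz i i i (q1 * q2)) as GF.
  rewrite Cmult_assoc in GF. fold Qi in GF.
  specialize (GF ltac:(intros s Hs; rewrite Zc_zz; destruct (Nat.ltb_spec i (S s)); try lia; reflexivity)).
  pose proof (Pprod_prefix (zz q1 q2 i i) i) as E1.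
  specialize (E1 ltac:(intros s Hs; rewrite Zc_zz; destruct (Nat.ltb_spec i (S s)); try lia; ring)).
  rewrite <- E1. rewrite <- GF. ring.
Qed.

Lemma AZ_gt i j : (j < i)%nat ->
  AZ i j * (qpoch v v j * qpoch (v * q2) v i * Qi) = qpoch (v * q2) v j * qpoch (v * q1 * q2) v i.
Proof.
  intros Hij.
  pose proof (GFzz i j i (q1 * q2)) as GF.
  rewrite Cmult_assoc in GF. fold Qi in GF.
  specialize (GF ltac:(intros s Hs; rewrite Zc_zz; destruct (Nat.ltb_spec i (S s)); destruct (Nat.ltb_spec j (S s)); try lia; reflexivity)).
  pose proof (Pprod_prefix (zz q1 q2 i j) j) as E1.
  specialize (E1 ltac:(intros s Hs; rewrite Zc_zz; destruct (Nat.ltb_spec i (S s)); destruct (Nat.ltb_spec j (S s)); try lia; ring)).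
  pose proof (Pprod_seg (zz q1 q2 i j) v q2 j i ltac:(lia)) as E2.
  specialize (E2 ltac:(intros s Hs; rewrite Zc_zz; destruct (Nat.ltb_spec i (S s)); destruct (Nat.ltb_spec j (S s)); try lia; ring)).
  rewrite <- E1.
  replace (AZ i j * (Pprod (zz q1 q2 i j) v j * qpoch (v * q2) v i * Qi))
    with (AZ i j * (Pprod (zz q1 q2 i j) v j * qpoch (v * q2) v i) * Qi) by ring.
  rewrite <- E2. rewrite <- GF. ring.
Qed.

Lemma Qi_nz : Qi <> 0.
Proof.
  intros H. pose proof (AZ_eq 0) as E. rewrite H in E. simpl in E.
  assert (E' : RtoC 1 = 0) by (rewrite <- E; ring). injection E'. lra.
Qed.

Lemma qv_nz i : qpoch v v i <> 0.
Proof. apply qpoch_nz; lra. Qed.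

Lemma qvq_nz q i : (Cmod q < 1)%R -> qpoch (v * q) v i <> 0.
Proof.
  intros Hq. apply qpoch_nz; [|lra]. rewrite Cmod_mult.
  pose proof (Cmod_ge_0 v). pose proof (Cmod_ge_0 q). nra.
Qed.

End Fin.

Section Fin2.
Variables q1 t1 q2 t2 v : C.
Hypothesis hv : (Cmod v < 1)%R.
Hypothesis ht1 : (Cmod t1 < 1)%R.
Hypothesis ht2 : (Cmod t2 < 1)%R.
Hypothesis hq1 : (Cmod q1 < 1)%R.
Hypothesis hq2 : (Cmod q2 < 1)%R.

Definition XX i j := Cpow t1 i * Cpow t2 j * AZ q1 q2 v i j.

Lemma AZ_bound Tp i j : is_series (fun n => Pn n * Cmod v ^ n)%R Tp -> (Cmod (AZ q1 q2 v i j) <= Tp)%R.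
Proof.
  intros HT. eapply iss_bound. apply Ainf_iss. apply zz_bound; auto. exact hv. exact HT.
  intros n. cbv beta. rewrite Cmod_mult, Cmod_Cpow. apply Rmult_le_compat_r. apply pow_le, Cmod_ge_0.
  apply acoef_bound. apply zz_bound; auto.
Qed.

Lemma XX_bound Tp i j : is_series (fun n => Pn n * Cmod v ^ n)%R Tp ->
  (Cmod (XX i j) <= Tp * Cmod t1 ^ i * Cmod t2 ^ j)%R.
Proof.
  intros HT. unfold XX. rewrite !Cmod_mult, !Cmod_Cpow.
  pose proof (AZ_bound Tp i j HT).
  assert (0 <= Cmod t1 ^ i * Cmod t2 ^ j)%R by (apply Rmult_le_pos; apply pow_le, Cmod_ge_0).
  replace (Tp * Cmod t1 ^ i * Cmod t2 ^ j)%R with ((Cmod t1 ^ i * Cmod t2 ^ j) * Tp)%R by ring.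
  apply Rmult_le_compat_l; auto.
Qed.

Lemma cm1 : (0 <= Cmod t1 < 1)%R. Proof. split. apply Cmod_ge_0. exact ht1. Qed.
Lemma cm2 : (0 <= Cmod t2 < 1)%R. Proof. split. apply Cmod_ge_0. exact ht2. Qed.

Lemma AZ_lt' i j : (i < j)%nat -> AZ q1 q2 v i j =
  qpoch (v * q1) v i * qpoch (v * q1 * q2) v j / (qpoch v v i * qpoch (v * q1) v j * Qi q1 q2 v).
Proof.
  intros H.
  pose proof (qv_nz v hv i). pose proof (qvq_nz v hv q1 j hq1). pose proof (Qi_nz q1 q2 v hv hq1 hq2).
  rewrite <- (AZ_lt q1 q2 v hv hq1 hq2 i j H). field. auto.
Qed.

Lemma AZ_gt' i j : (j < i)%nat -> AZ q1 q2 v i j =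
  qpoch (v * q2) v j * qpoch (v * q1 * q2) v i / (qpoch v v j * qpoch (v * q2) v i * Qi q1 q2 v).
Proof.
  intros H.
  pose proof (qv_nz v hv j). pose proof (qvq_nz v hv q2 i hq2). pose proof (Qi_nz q1 q2 v hv hq1 hq2).
  rewrite <- (AZ_gt q1 q2 v hv hq1 hq2 i j H). field. auto.
Qed.

Lemma AZ_eq' i : AZ q1 q2 v i i = qpoch (v * q1 * q2) v i / (qpoch v v i * Qi q1 q2 v).
Proof.
  pose proof (qv_nz v hv i). pose proof (Qi_nz q1 q2 v hv hq1 hq2).
  rewrite <- (AZ_eq q1 q2 v hv hq1 hq2 i). field. auto.
Qed.

End Fin2.

Lemma one_minus_nz q : (Cmod q < 1)%R -> RtoC 1 - q <> 0.
Proof.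
  intros H E. assert (q = 1) by (rewrite <- (Cplus_0_l q), <- E; ring). subst.
  rewrite Cmod_1 in H. lra.
Qed.

Theorem lemma3p5 (q1 t1 q2 t2 v : C)
  (hv : (Cmod v < 1)%R) (ht1 : (Cmod t1 < 1)%R) (ht2 : (Cmod t2 < 1)%R)
  (hq1 : (Cmod q1 < 1)%R) (hq2 : (Cmod q2 < 1)%R) :
  qavg (fun lam => Bhat lam q1 t1 * Bhat lam q2 t2) v =
  / (RtoC 1 - q1) * / (RtoC 1 - q2) *
    (T1 q1 t1 q2 t2 v + T2 q1 t1 q2 t2 v + T3 q1 t1 q2 t2 v).
Proof.
  destruct (Tp_ex v hv) as [Tp HTp].
  pose proof (XX_bound q1 t1 q2 t2 v hv hq1 hq2 Tp) as HX.
  assert (HX' : forall i j, (Cmod (XX q1 t1 q2 t2 v i j) <= Tp * Cmod t1 ^ i * Cmod t2 ^ j)%R)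
    by (intros; apply HX; exact HTp).
  clear HX.
  pose proof (cm1 t1 ht1) as C1. pose proof (cm2 t2 ht2) as C2.
  pose proof (Qi_nz q1 q2 v hv hq1 hq2) as HQ.
  transitivity (qavg (fB q1 t1 q2 t2) v); [reflexivity|].
  rewrite (LHS_eq q1 t1 q2 t2 v hv ht1 ht2 hq1 hq2).
  change (csum (fun i => csum (fun j => Cpow t1 i * Cpow t2 j * Ainf (zz q1 q2 i j) v)))
    with (csum (fun i => csum (XX q1 t1 q2 t2 v i))).
  rewrite (split3 (XX q1 t1 q2 t2 v) Tp (Cmod t1) (Cmod t2) C1 C2 HX').
  set (X := XX q1 t1 q2 t2 v) in *.
  set (Q := Qi q1 q2 v) in *.
  assert (HU : Q * csum (fun i => csum (fun k => X i (k + i + 1)%nat)) =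
    csum (fun i => Cpow t1 i * qpoch (v * q1) v i / qpoch v v i *
      csum (fun k => let j := (k + i + 1)%nat in
            Cpow t2 j * qpoch (v * q1 * q2) v j / qpoch (v * q1) v j))).
  { rewrite <- (csum_scal _ _ _ (U_iss X Tp (Cmod t1) (Cmod t2) C1 C2 HX')).
    apply csum_ext. intros i.
    set (B := fun k => let j := (k + i + 1)%nat in
            Cpow t2 j * qpoch (v * q1 * q2) v j / qpoch (v * q1) v j).
    pose proof (qv_nz v hv i) as N1. pose proof (qvq_nz v hv q1 i hq1) as N2.
    assert (HB : iss B (csum B)).
    { apply iss_csum.
      assert (HB1 : forall k, (Cmod (Cpow t2 (k + i + 1) * AZ q1 q2 v i (k + i + 1)) <= (Tp * Cmod t2 ^ (i + 1)) * Cmod t2 ^ k)%R).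
      { intros k. rewrite Cmod_mult, Cmod_Cpow. pose proof (AZ_bound q1 q2 v hv hq1 hq2 Tp i (k + i + 1) HTp).
        replace (Cmod t2 ^ (k + i + 1))%R with (Cmod t2 ^ (i + 1) * Cmod t2 ^ k)%R by (rewrite <- pow_add; f_equal; lia).
        assert (0 <= Cmod t2 ^ (i + 1) * Cmod t2 ^ k)%R by (apply Rmult_le_pos; apply pow_le, Cmod_ge_0).
        replace (Tp * Cmod t2 ^ (i + 1) * Cmod t2 ^ k)%R with ((Cmod t2 ^ (i + 1) * Cmod t2 ^ k) * Tp)%R by ring.
        apply Rmult_le_compat_l; auto. }
      assert (HB2 : ex_series (fun k => (Tp * Cmod t2 ^ (i + 1)) * Cmod t2 ^ k)%R).
      { eexists. apply issR_scal_l, gR, C2. }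
      destruct (iss_abs _ _ HB1 HB2) as [W HW].
      exists (qpoch v v i * Q / qpoch (v * q1) v i * W).
        eapply iss_ext; [|apply iss_scal, HW]. intros k. cbv beta. unfold B.
        rewrite (AZ_lt' q1 q2 v hv hq1 hq2 i (k + i + 1)) by lia.
        pose proof (qvq_nz v hv q1 (k + i + 1) hq1). fold Q. cfield. auto. }
    rewrite <- (csum_scal _ _ _ HB).
    rewrite <- (csum_scal _ _ _ (X_row_shift X Tp (Cmod t1) (Cmod t2) C2 HX' i)).
    apply csum_ext. intros k. unfold X, XX, B. cbv zeta.
    rewrite (AZ_lt' q1 q2 v hv hq1 hq2 i (k + i + 1)) by lia.
    pose proof (qvq_nz v hv q1 (k + i + 1) hq1). fold Q. field. auto. }
  assert (HL : Q * csum (fun j => csum (fun k => X (k + j + 1)%nat j)) =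
    csum (fun i => Cpow t2 i * qpoch (v * q2) v i / qpoch v v i *
      csum (fun k => let j := (k + i + 1)%nat in
            Cpow t1 j * qpoch (v * q1 * q2) v j / qpoch (v * q2) v j))).
  { rewrite <- (csum_scal _ _ _ (L_iss X Tp (Cmod t1) (Cmod t2) C1 C2 HX')).
    apply csum_ext. intros i.
    set (B := fun k => let j := (k + i + 1)%nat in
            Cpow t1 j * qpoch (v * q1 * q2) v j / qpoch (v * q2) v j).
    pose proof (qv_nz v hv i) as N1. pose proof (qvq_nz v hv q2 i hq2) as N2.
    assert (HB : iss B (csum B)).
    { apply iss_csum.
      assert (HB1 : forall k, (Cmod (Cpow t1 (k + i + 1) * AZ q1 q2 v (k + i + 1) i) <= (Tp * Cmod t1 ^ (i + 1)) * Cmod t1 ^ k)%R).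
      { intros k. rewrite Cmod_mult, Cmod_Cpow. pose proof (AZ_bound q1 q2 v hv hq1 hq2 Tp (k + i + 1) i HTp).
        replace (Cmod t1 ^ (k + i + 1))%R with (Cmod t1 ^ (i + 1) * Cmod t1 ^ k)%R by (rewrite <- pow_add; f_equal; lia).
        assert (0 <= Cmod t1 ^ (i + 1) * Cmod t1 ^ k)%R by (apply Rmult_le_pos; apply pow_le, Cmod_ge_0).
        replace (Tp * Cmod t1 ^ (i + 1) * Cmod t1 ^ k)%R with ((Cmod t1 ^ (i + 1) * Cmod t1 ^ k) * Tp)%R by ring.
        apply Rmult_le_compat_l; auto. }
      assert (HB2 : ex_series (fun k => (Tp * Cmod t1 ^ (i + 1)) * Cmod t1 ^ k)%R).
      { eexists. apply issR_scal_l, gR, C1. }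
      destruct (iss_abs _ _ HB1 HB2) as [W HW].
      exists (qpoch v v i * Q / qpoch (v * q2) v i * W).
        eapply iss_ext; [|apply iss_scal, HW]. intros k. cbv beta. unfold B.
        rewrite (AZ_gt' q1 q2 v hv hq1 hq2 (k + i + 1) i) by lia.
        pose proof (qvq_nz v hv q2 (k + i + 1) hq2). fold Q. cfield. auto. }
    rewrite <- (csum_scal _ _ _ HB).
    rewrite <- (csum_scal _ _ _ (X_col_shift X Tp (Cmod t1) (Cmod t2) C1 HX' i)).
    apply csum_ext. intros k. unfold X, XX, B. cbv zeta.
    rewrite (AZ_gt' q1 q2 v hv hq1 hq2 (k + i + 1) i) by lia.
    pose proof (qvq_nz v hv q2 (k + i + 1) hq2). fold Q. field. auto. }
  assert (HD : Q * csum (fun i => X i i) =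
    csum (fun i => Cpow (t1 * t2) i * qpoch (v * q1 * q2) v i / qpoch v v i)).
  { rewrite <- (csum_scal _ _ _ (D_iss X Tp (Cmod t1) (Cmod t2) C1 C2 HX')).
    apply csum_ext. intros i. unfold X, XX. rewrite AZ_eq' by auto.
    pose proof (qv_nz v hv i). rewrite Cpow_mul_l. fold Q. field. auto. }
  unfold T1, T2, T3. change (qpoch_inf (v * q1 * q2) v) with Q. cbv zeta in HU, HL.
  rewrite <- HU, <- HL, <- HD.
  pose proof (one_minus_nz q1 hq1). pose proof (one_minus_nz q2 hq2).
  unfold c0. field. auto.
Qed.
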